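(* Let $\mathbb{S}=\mathbb{R}/2\pi\mathbb{Z}$, let $\mathcal{H}_0\in\mathbb{R}$ be a nonzero constant, and let $u_0\in H^1(\mathbb{S})$ satisfy $\mathcal{F}(u_0)=0$ and $\mathcal{H}(u_0)=\mathcal{H}_0$, where $\mathcal{F}(v)=\int_{\mathbb{S}}\sin v(x)\,\mathrm{d}x$ and $\mathcal{H}(v)=\int_{\mathbb{S}}\cos v(x)\,\mathrm{d}x$. Let $u\in C^1([0,\infty);H^1(\mathbb{S}))$ be the unique global solution of $$u_t(t,x)=\big(\partial_x^{\dagger}\sin u(t)\big)(x)-\frac{1}{\mathcal{H}_0}\tilde{\mathcal{C}}(u(t)),\qquad u(0,x)=u_0(x),$$ where $\tilde{\mathcal{C}}(v)=\int_{\mathbb{S}}\cos v(x)\,\big(\partial_x^{\dagger}\sin v\big)(x)\,\mathrm{d}x$. Then $\mathcal{F}(u(t))=0$ and $\mathcal{H}(u(t))=\mathcal{H}_0$ for all $t\ge0$.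
   Context: $H^1(\mathbb{S})$ is the periodic Sobolev space. The operator $\partial_x^{\dagger}$ is defined via Fourier series by $\partial_x^{\dagger}v(x)=\sum_{k\in\mathbb{Z},\,k\neq0}\frac{\hat v(k)}{k\mathrm{i}}\exp(k\mathrm{i}x)$ with $\hat v(k)=\frac{1}{2\pi}\int_{\mathbb{S}}v(x)\exp(-k\mathrm{i}x)\,\mathrm{d}x$. (Existence and uniqueness of this global solution for any $u_0\in H^1(\mathbb{S})$ and nonzero $\mathcal{H}_0$ is known.) *)

(* Defs.v *)
From Stdlib Require Import Reals ZArith.
From Coquelicot Require Import Coquelicot.
Open Scope R_scope.

Definition cexp (theta : R) : C := (cos theta, sin theta).

(* Functions on S = R/2piZ are represented as 2pi-periodic functions R -> R. *)
Definition periodic (v : R -> R) : Prop := forall x, v (x + 2 * PI) = v x.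

Definition fourier (v : R -> R) (k : Z) : C :=
  Cmult (RtoC (/ (2 * PI)))
  (RInt (V := C_R_CompleteNormedModule)
       (fun x => Cmult (RtoC (v x)) (cexp (- IZR k * x))) 0 (2 * PI)).

(* H^1(S), via the Fourier characterization sum_k (1+k^2)|\hat v(k)|^2 < oo;
   elements are represented by their (unique) continuous representative. *)
Definition H1_tail (v : R -> R) (n : nat) : R :=
  let k := Z.of_nat (S n) in
  (1 + (IZR k) ^ 2) * (Cmod (fourier v k) ^ 2 + Cmod (fourier v (- k)) ^ 2).

Definition inH1 (v : R -> R) : Prop :=
  periodic v /\ (forall x, continuous v x) /\ ex_series (H1_tail v).

Definition H1norm (v : R -> R) : R :=
  sqrt (Cmod (fourier v 0%Z) ^ 2 + Series (H1_tail v)).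

(* partial_x^dagger v (x) = sum_{k<>0} \hat v(k)/(k i) exp(k i x)
   (real part; summed symmetrically over +-k, the series being absolutely
   convergent) *)
Definition dagger (v : R -> R) (x : R) : R :=
  Series (fun n =>
    let k := Z.of_nat (S n) in
    Re (Cplus (Cdiv (Cmult (fourier v k) (cexp (IZR k * x))) (0, IZR k))
              (Cdiv (Cmult (fourier v (- k)) (cexp (- IZR k * x))) (0, - IZR k)))).

Definition calF (v : R -> R) : R := RInt (fun x => sin (v x)) 0 (2 * PI).
Definition calH (v : R -> R) : R := RInt (fun x => cos (v x)) 0 (2 * PI).
Definition calCt (v : R -> R) : R :=
  RInt (fun x => cos (v x) * dagger (fun y => sin (v y)) x) 0 (2 * PI).

(* u in C^1([0,oo); H^1(S)) with time derivative u' (taken in H^1 norm) *)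
Definition C1_H1 (u u' : R -> R -> R) : Prop :=
  (forall t, 0 <= t -> inH1 (u t) /\ inH1 (u' t)) /\
  (forall t, 0 <= t ->
     filterlim (fun h => H1norm (fun x => (u (t + h) x - u t x) / h - u' t x))
       (within (fun h => h <> 0 /\ 0 <= t + h) (locally 0)) (locally 0)) /\
  (forall t, 0 <= t ->
     filterlim (fun s => H1norm (fun x => u' s x - u' t x))
       (within (fun s => 0 <= s) (locally t)) (locally 0)).

(* Main.v *)
Require Import Defs.
From Stdlib Require Import Reals ZArith.
From Coquelicot Require Import Coquelicot.
From Stdlib Require Import Lra Lia FunctionalExtensionality.
Open Scope R_scope.


Ltac rfix := match goal with |- @eq _ ?a ?b => change (@eq R a b) end.

Lemma m1R (r : R) : -1 * r = - r. Proof. ring. Qed.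

Definition CT (f : R -> R) := forall x, continuous f x.

Lemma ct_ex f a b : CT f -> ex_RInt f a b.
Proof. intros H; apply (@ex_RInt_continuous R_CompleteNormedModule); intros; apply H. Qed.

Lemma ct_const c : CT (fun _ => c).
Proof. intros x; apply continuous_const. Qed.
Lemma ct_id : CT (fun x => x).
Proof. intros x; apply continuous_id. Qed.
Lemma ct_plus f g : CT f -> CT g -> CT (fun x => f x + g x).
Proof. intros Hf Hg x; apply (continuous_plus f g); auto. Qed.
Lemma ct_mult f g : CT f -> CT g -> CT (fun x => f x * g x).
Proof. intros Hf Hg x; apply (continuous_mult f g); auto. Qed.
Lemma ct_opp f : CT f -> CT (fun x => - f x).
Proof. intros Hf x; apply (continuous_opp f); auto. Qed.
Lemma ct_minus f g : CT f -> CT g -> CT (fun x => f x - g x).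
Proof. intros Hf Hg; apply ct_plus; auto; apply ct_opp; auto. Qed.
Lemma ct_scal c f : CT f -> CT (fun x => c * f x).
Proof. intros Hf; apply ct_mult; auto; apply ct_const. Qed.
Lemma ct_sin f : CT f -> CT (fun x => sin (f x)).
Proof. intros Hf x; apply continuous_sin_comp; auto. Qed.
Lemma ct_cos f : CT f -> CT (fun x => cos (f x)).
Proof. intros Hf x; apply continuous_cos_comp; auto. Qed.
Lemma ct_comp f g : CT f -> CT g -> CT (fun x => g (f x)).
Proof. intros Hf Hg x; apply (continuous_comp f g); auto. Qed.
Lemma ct_lin a b : CT (fun x => a * x + b).
Proof. apply ct_plus. apply ct_scal, ct_id. apply ct_const. Qed.
Lemma ct_sinl a : CT (fun x => sin (a * x)).
Proof. apply ct_sin. apply ct_scal, ct_id. Qed.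
Lemma ct_cosl a : CT (fun x => cos (a * x)).
Proof. apply ct_cos. apply ct_scal, ct_id. Qed.
Lemma ct_ext f g : (forall x, f x = g x) -> CT f -> CT g.
Proof. intros E Hf x. apply (continuous_ext f g); auto. Qed.

Lemma ct_sum (F : nat -> R -> R) N : (forall k, CT (F k)) ->
  CT (fun x => sum_f_R0 (fun k => F k x) N).
Proof.
  intros H; induction N; simpl. apply H. apply ct_plus; auto.
Qed.

Lemma RInt_plusR f g a b : CT f -> CT g ->
  RInt (fun x => f x + g x) a b = RInt f a b + RInt g a b.
Proof. intros Hf Hg. apply (RInt_plus f g); apply ct_ex; auto. Qed.
Lemma RInt_minusR f g a b : CT f -> CT g ->
  RInt (fun x => f x - g x) a b = RInt f a b - RInt g a b.
Proof. intros Hf Hg. apply (RInt_minus f g); apply ct_ex; auto. Qed.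
Lemma RInt_scalR c f a b : CT f ->
  RInt (fun x => c * f x) a b = c * RInt f a b.
Proof. intros Hf. apply (RInt_scal f); apply ct_ex; auto. Qed.
Lemma RInt_scalR' c f a b : CT f ->
  RInt (fun x => f x * c) a b = RInt f a b * c.
Proof. intros Hf. rewrite Rmult_comm, <- (RInt_scalR c f a b Hf).
  apply RInt_ext; intros x _; apply Rmult_comm. Qed.
Lemma RInt_constR (c a b : R) : RInt (fun _ => c) a b = (b - a) * c.
Proof. rewrite RInt_const. reflexivity. Qed.
Lemma RInt_extR (f g : R -> R) a b : (forall x, f x = g x) -> RInt f a b = RInt g a b.
Proof. intros E; apply RInt_ext; intros; auto. Qed.

Lemma RInt_sum (F : nat -> R -> R) N a b : (forall k, CT (F k)) ->
  RInt (fun x => sum_f_R0 (fun k => F k x) N) a b = sum_f_R0 (fun k => RInt (F k) a b) N.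
Proof.
  intros H; induction N; simpl. reflexivity.
  rewrite RInt_plusR; auto. rewrite IHN; auto. apply ct_sum; auto.
Qed.

Lemma RInt_ChaslesR f a b c : CT f -> RInt f a b + RInt f b c = RInt f a c.
Proof. intros Hf. apply (RInt_Chasles f); apply ct_ex; auto. Qed.

Lemma RInt_swapR (f : R -> R) a b : CT f -> RInt f a b = - RInt f b a.
Proof. intros Hf. rewrite <- (opp_RInt_swap f b a). unfold opp; simpl; ring. apply ct_ex; auto. Qed.

Lemma ser_nonneg (a : nat -> R) : (forall n, 0 <= a n) -> ex_series a -> 0 <= Series a.
Proof.
  intros H1 H2.
  assert (E : Series (fun n => 0 * a n) = 0). rewrite Series_scal_l; ring.
  apply Rle_trans with (Series (fun n => 0 * a n)). lra.
  apply Series_le; auto. intros n; specialize (H1 n); split; lra.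
Qed.

Lemma ex_series_tail (a : nat -> R) n : ex_series a -> ex_series (fun k => a (n + k)%nat).
Proof.
  intros H. destruct n. simpl. auto.
  apply (ex_series_incr_n a (S n)); auto.
Qed.

Lemma psum_le (a : nat -> R) N : (forall n, 0 <= a n) -> ex_series a -> sum_f_R0 a N <= Series a.
Proof.
  intros H1 H2. rewrite (Series_incr_n a (S N)); auto. 2: lia. simpl Init.Nat.pred.
  assert (0 <= Series (fun k => a (S N + k)%nat)). apply ser_nonneg; auto.
  apply (ex_series_tail a (S N)); auto. lra.
Qed.

Lemma sum_n_f_R0 (a : nat -> R) N : sum_n a N = sum_f_R0 a N.
Proof. apply sum_n_Reals. Qed.

Lemma ex_series_bounded (a : nat -> R) M : (forall n, 0 <= a n) -> (forall N, sum_f_R0 a N <= M) ->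
  ex_series a.
Proof.
  intros H1 H2.
  assert (E : ex_finite_lim_seq (sum_n a)).
  { apply (ex_finite_lim_seq_incr _ M).
    intros n. rewrite !sum_n_f_R0. rewrite tech5. specialize (H1 (S n)). lra.
    intros n; rewrite sum_n_f_R0; auto. }
  destruct E as [l Hl]. exists l. exact Hl.
Qed.

Lemma tail_small (a : nat -> R) : ex_series a -> forall eps, 0 < eps ->
  exists N, forall n, (N <= n)%nat -> Rabs (Series a - sum_f_R0 a n) < eps.
Proof.
  intros H eps Heps. apply Series_correct in H.
  assert (H' : is_lim_seq (sum_n a) (Series a)) by exact H.
  apply is_lim_seq_spec in H'. destruct (H' (mkposreal eps Heps)) as [N HN].
  exists N. intros n Hn. specialize (HN n Hn). rewrite sum_n_f_R0 in HN.
  rewrite Rabs_minus_sym. exact HN.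
Qed.

Lemma ct_eps g x : CT g -> forall eps, 0 < eps ->
  exists d, 0 < d /\ forall y, Rabs (y - x) < d -> Rabs (g y - g x) < eps.
Proof.
  intros Hg eps Heps. specialize (Hg x).
  destruct (proj1 (filterlim_locally g (g x)) Hg (mkposreal eps Heps)) as [d Hd].
  exists d. split. apply cond_pos. intros y Hy. apply (Hd y). exact Hy.
Qed.

Lemma RInt_abs_le f g a b : a <= b -> CT f -> CT g ->
  (forall x, a <= x <= b -> Rabs (f x) <= g x) -> Rabs (RInt f a b) <= RInt g a b.
Proof.
  intros Hab Hf Hg H.
  eapply Rle_trans. apply abs_RInt_le; auto. apply ct_ex; auto.
  apply RInt_le; auto. apply (ex_RInt_norm f), ct_ex; auto. apply ct_ex; auto.
  intros; apply H; lra.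
Qed.

Lemma RInt_le_R f g a b : a <= b -> CT f -> CT g ->
  (forall x, a <= x <= b -> f x <= g x) -> RInt f a b <= RInt g a b.
Proof.
  intros Hab Hf Hg H. apply RInt_le; auto. apply ct_ex; auto. apply ct_ex; auto.
  intros; apply H; lra.
Qed.

Lemma sum_scal_l c (a : nat -> R) N : sum_f_R0 (fun i => c * a i) N = c * sum_f_R0 a N.
Proof. rewrite scal_sum. apply sum_eq; intros; ring. Qed.

Lemma exR_scal c (a : nat -> R) : ex_series a -> ex_series (fun n => c * a n).
Proof. intros H. exact (ex_series_scal_l c a H). Qed.
Lemma exR_plus (a b : nat -> R) : ex_series a -> ex_series b -> ex_series (fun n => a n + b n).
Proof. intros H1 H2. exact (ex_series_plus a b H1 H2). Qed.
Lemma exR_div c (a : nat -> R) : ex_series a -> ex_series (fun n => a n / c).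
Proof. intros H. apply (ex_series_ext (fun n => / c * a n)). intros; simpl; unfold Rdiv; apply Rmult_comm.
  apply exR_scal; auto. Qed.


Definition cA (v : R -> R) (k : nat) := RInt (fun x => v x * cos (INR k * x)) 0 (2*PI).
Definition sB (v : R -> R) (k : nat) := RInt (fun x => v x * sin (INR k * x)) 0 (2*PI).

Lemma RInt_C_pair (g : R -> C) a b la lb :
  is_RInt (fun t => fst (g t)) a b la -> is_RInt (fun t => snd (g t)) a b lb ->
  RInt (V := C_R_CompleteNormedModule) g a b = (la, lb).
Proof.
  intros H1 H2. apply is_RInt_unique.
  apply (is_RInt_fct_extend_pair (U := R_NormedModule) (V := R_NormedModule)); auto.
Qed.

Lemma fourier_gen v (z : R) : CT v ->
  fourier v 0%Z = (/(2*PI) * RInt v 0 (2*PI), 0) /\ True.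
Abort.

Lemma fourier_real v (c : R) : CT v ->
  Cmult (RtoC (/ (2 * PI)))
  (RInt (V := C_R_CompleteNormedModule)
       (fun x => Cmult (RtoC (v x)) (cexp (c * x))) 0 (2 * PI)) =
  (/(2*PI) * RInt (fun x => v x * cos (c * x)) 0 (2*PI),
   /(2*PI) * RInt (fun x => v x * sin (c * x)) 0 (2*PI)).
Proof.
  intros Hv.
  rewrite (RInt_C_pair _ _ _ (RInt (fun x => v x * cos (c * x)) 0 (2*PI))
                          (RInt (fun x => v x * sin (c * x)) 0 (2*PI))).
  - unfold Cmult, RtoC; simpl. f_equal; ring.
  - apply (is_RInt_ext (fun x => v x * cos (c * x))).
    intros x _; simpl; ring.
    apply (RInt_correct (V := R_CompleteNormedModule)), ct_ex, ct_mult; auto; apply ct_cosl.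
  - apply (is_RInt_ext (fun x => v x * sin (c * x))).
    intros x _; simpl; ring.
    apply (RInt_correct (V := R_CompleteNormedModule)), ct_ex, ct_mult; auto; apply ct_sinl.
Qed.

Lemma IZR_nat k : IZR (Z.of_nat k) = INR k.
Proof. rewrite INR_IZR_INZ; reflexivity. Qed.


Lemma cA_ext v : CT v -> forall k,
  RInt (fun x => v x * cos (- INR k * x)) 0 (2*PI) = cA v k.
Proof. intros Hv k; unfold cA; apply RInt_extR; intros x.
  rewrite Ropp_mult_distr_l_reverse, cos_neg; reflexivity. Qed.

Lemma sB_ext v : CT v -> forall k,
  RInt (fun x => v x * sin (- INR k * x)) 0 (2*PI) = - sB v k.
Proof. intros Hv k; unfold sB.
  rewrite (RInt_extR _ (fun x => -1 * (v x * sin (INR k * x)))), RInt_scalR. apply m1R.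
  apply ct_mult; auto; apply ct_sinl.
  intros x. rewrite Ropp_mult_distr_l_reverse, sin_neg; ring. Qed.

Lemma fourier_pos v k : CT v ->
  fourier v (Z.of_nat k) = (/(2*PI) * cA v k, /(2*PI) * - sB v k).
Proof.
  intros Hv. unfold fourier. rewrite IZR_nat.
  rewrite (fourier_real v (- INR k)); auto.
  rewrite cA_ext, sB_ext; auto.
Qed.

Lemma fourier_neg v k : CT v ->
  fourier v (- Z.of_nat k) = (/(2*PI) * cA v k, /(2*PI) * sB v k).
Proof.
  intros Hv. unfold fourier. rewrite opp_IZR, IZR_nat, Ropp_involutive.
  rewrite (fourier_real v (INR k)); auto.
Qed.

Lemma Cmod2 a b : Cmod (a, b) ^ 2 = a ^ 2 + b ^ 2.
Proof. unfold Cmod; simpl fst; simpl snd. rewrite pow2_sqrt; [ring|nra]. Qed.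

Lemma H1_tail_real v n : CT v ->
  H1_tail v n = (1 + INR (S n) ^ 2) * (2 * (/(2*PI))^2 * (cA v (S n) ^ 2 + sB v (S n) ^ 2)).
Proof.
  intros Hv. unfold H1_tail. cbv zeta. rewrite fourier_pos, fourier_neg, !Cmod2, IZR_nat; auto.
  ring.
Qed.

Lemma fourier_0 v : CT v -> fourier v 0%Z = (/(2*PI) * cA v 0, /(2*PI) * - sB v 0).
Proof. intros; apply (fourier_pos v 0); auto. Qed.

Lemma sB_0 v : sB v 0 = 0.
Proof. unfold sB. rewrite (RInt_extR _ (fun _ => 0)). rewrite RInt_constR. rfix; ring.
  intros x; simpl; rewrite Rmult_0_l, sin_0; ring. Qed.

Lemma cA_0 v : cA v 0 = RInt v 0 (2*PI).
Proof. unfold cA. apply RInt_extR; intros x; simpl; rewrite Rmult_0_l, cos_0; ring. Qed.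

Lemma dagger_real v x : CT v ->
  dagger v x = Series (fun n =>
    (cA v (S n) * sin (INR (S n) * x) - sB v (S n) * cos (INR (S n) * x)) / (PI * INR (S n))).
Proof.
  intros Hv. unfold dagger. apply Series_ext. intros n. cbv zeta.
  rewrite fourier_pos, fourier_neg, IZR_nat; auto.
  assert (0 < INR (S n)) by (apply lt_0_INR; lia).
  assert (0 < PI) by apply PI_RGT_0.
  remember (INR (S n)) as k.
  unfold cexp, Cdiv, Cmult, Cinv, Cplus, Re; simpl.
  rewrite Ropp_mult_distr_l_reverse, cos_neg, sin_neg.
  field. lra.
Qed.


Definition Dk (n : nat) (s : R) := 2 * sum_f_R0 (fun k => cos (INR k * s)) n - 1.
Definition Fk (N : nat) (s : R) := / INR (S N) * sum_f_R0 (fun n => Dk n s) N.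

Lemma cos_SS n s : cos (INR (S (S n)) * s) = cos (INR (S n) * s + s).
Proof. f_equal. rewrite (S_INR (S n)). ring. Qed.
Lemma cos_Sm n s : cos (INR n * s) = cos (INR (S n) * s - s).
Proof. f_equal. rewrite (S_INR n). ring. Qed.

Lemma Dk_id n s : Dk n s * (1 - cos s) = cos (INR n * s) - cos (INR (S n) * s).
Proof.
  induction n.
  - unfold Dk; simpl sum_f_R0. replace (INR 0) with 0 by reflexivity.
    replace (INR 1) with 1 by reflexivity. rewrite Rmult_0_l, Rmult_1_l, cos_0. ring.
  - assert (E : Dk (S n) s = Dk n s + 2 * cos (INR (S n) * s)).
    { unfold Dk; rewrite tech5. ring. }
    rewrite E, Rmult_plus_distr_r, IHn.
    rewrite cos_SS, (cos_Sm n s) at 1. rewrite cos_plus, cos_minus. ring.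
Qed.

Lemma sumD_id N s : sum_f_R0 (fun n => Dk n s) N * (1 - cos s) = 1 - cos (INR (S N) * s).
Proof.
  induction N.
  - simpl sum_f_R0. rewrite Dk_id. replace (INR 0) with 0 by reflexivity.
    rewrite Rmult_0_l, cos_0; ring.
  - rewrite tech5, Rmult_plus_distr_r, IHN, Dk_id. ring.
Qed.

Lemma Fk_id N s : Fk N s * (1 - cos s) = / INR (S N) * (1 - cos (INR (S N) * s)).
Proof. unfold Fk. rewrite Rmult_assoc, sumD_id. reflexivity. Qed.

Lemma cos_one s : cos s = 1 -> forall k, cos (INR k * s) = 1.
Proof.
  intros H. assert (Hs : sin s = 0).
  { assert (E := sin2_cos2 s). rewrite H in E. unfold Rsqr in E.
    assert (sin s * sin s = 0) by lra. destruct (Rmult_integral _ _ H0); auto. }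
  induction k. simpl; rewrite Rmult_0_l; apply cos_0.
  rewrite S_INR, Rmult_plus_distr_r, Rmult_1_l, cos_plus, IHk, H, Hs. ring.
Qed.

Lemma INR_S_pos n : 0 < INR (S n).
Proof. apply lt_0_INR; lia. Qed.

Lemma Fk_nonneg N s : 0 <= Fk N s.
Proof.
  destruct (Req_dec (cos s) 1) as [H|H].
  - unfold Fk. apply Rmult_le_pos. left; apply Rinv_0_lt_compat, INR_S_pos.
    assert (forall n, 0 <= Dk n s).
    { intros n. unfold Dk. rewrite (sum_eq _ (fun _ => 1)).
      rewrite sum_cte. rewrite S_INR. pose proof (pos_INR n). lra.
      intros i _. apply cos_one; auto. }
    apply cond_pos_sum; auto.
  - assert (Hc : cos s < 1) by (pose proof (COS_bound s); lra).
    assert (E := Fk_id N s).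
    assert (0 <= / INR (S N) * (1 - cos (INR (S N) * s))).
    { apply Rmult_le_pos. left; apply Rinv_0_lt_compat, INR_S_pos.
      pose proof (COS_bound (INR (S N) * s)); lra. }
    rewrite <- E in H0.
    destruct (Rle_or_lt 0 (Fk N s)); auto. nra.
Qed.

Lemma Fk_small N s d : 0 < d -> d <= Rabs s -> Rabs s <= PI ->
  Fk N s <= 2 / (INR (S N) * (1 - cos d)).
Proof.
  intros Hd H1 H2.
  assert (Hc : cos s <= cos d).
  { rewrite <- (cos_neg s) at 1. unfold Rabs in *; destruct (Rcase_abs s).
    apply cos_decr_1; lra. rewrite cos_neg. apply cos_decr_1; lra. }
  assert (Hd1 : cos d < 1).
  { assert (cos d < cos 0) by (apply cos_decreasing_1; lra). rewrite cos_0 in H; lra. }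
  assert (E := Fk_id N s).
  pose proof (INR_S_pos N).
  pose proof (COS_bound (INR (S N) * s)).
  pose proof (Fk_nonneg N s).
  assert (A1 : Fk N s * (1 - cos s) <= 2 / INR (S N)).
  { rewrite E. unfold Rdiv. rewrite Rmult_comm. apply Rmult_le_compat_r.
    left; apply Rinv_0_lt_compat; auto. lra. }
  assert (A2 : Fk N s * (1 - cos d) <= Fk N s * (1 - cos s)) by nra.
  apply (Rmult_le_reg_r (1 - cos d)). lra.
  replace (2 / (INR (S N) * (1 - cos d)) * (1 - cos d)) with (2 / INR (S N)).
  lra. field; split; lra.
Qed.

Lemma ct_Dk n : CT (Dk n).
Proof. unfold Dk. apply ct_minus. apply ct_scal. apply (ct_sum (fun k s => cos (INR k * s))).
  intros; apply ct_cosl. apply ct_const. Qed.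
Lemma ct_Fk N : CT (Fk N).
Proof. unfold Fk. apply ct_scal. apply (ct_sum (fun n s => Dk n s)). intros; apply ct_Dk. Qed.

Lemma cos_k_per k s : cos (INR k * (s + 2 * PI)) = cos (INR k * s).
Proof. replace (INR k * (s + 2 * PI)) with (INR k * s + 2 * INR k * PI) by ring.
  apply cos_period. Qed.
Lemma sin_k_per k s : sin (INR k * (s + 2 * PI)) = sin (INR k * s).
Proof. replace (INR k * (s + 2 * PI)) with (INR k * s + 2 * INR k * PI) by ring.
  apply sin_period. Qed.

Lemma Dk_per n s : Dk n (s + 2 * PI) = Dk n s.
Proof. unfold Dk. f_equal. f_equal. apply sum_eq; intros; apply cos_k_per. Qed.
Lemma Fk_per N s : Fk N (s + 2 * PI) = Fk N s.
Proof. unfold Fk. f_equal. apply sum_eq; intros; apply Dk_per. Qed.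

Lemma Icos k : (0 < k)%nat -> RInt (fun s => cos (INR k * s)) 0 (2 * PI) = 0.
Proof.
  intros Hk. assert (Hk' : 0 < INR k) by (apply lt_0_INR; auto).
  set (F := fun s => sin (INR k * s) / INR k).
  assert (H : is_RInt (fun s => cos (INR k * s)) 0 (2 * PI) (minus (F (2 * PI)) (F 0))).
  { apply (is_RInt_derive (V := R_CompleteNormedModule) F).
    - intros x _. unfold F. auto_derive. auto. field. lra.
    - intros x _. apply ct_cosl. }
  transitivity (minus (F (2 * PI)) (F 0)). apply is_RInt_unique; exact H.
  unfold F, minus, plus, opp; simpl.
  replace (INR k * (2 * PI)) with (0 + 2 * INR k * PI) by ring.
  rewrite sin_period, Rmult_0_r, sin_0. field. lra.
Qed.

Lemma Icos0 : RInt (fun s => cos (INR 0 * s)) 0 (2 * PI) = 2 * PI.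
Proof. rewrite (RInt_extR _ (fun _ => 1)). rewrite RInt_constR. rfix; ring.
  intros; simpl; rewrite Rmult_0_l; apply cos_0. Qed.

Lemma Isumcos n : sum_f_R0 (fun k => RInt (fun s => cos (INR k * s)) 0 (2 * PI)) n = 2 * PI.
Proof.
  induction n. simpl. apply Icos0.
  rewrite tech5, IHn, Icos. ring. lia.
Qed.

Lemma IDk n : RInt (Dk n) 0 (2 * PI) = 2 * PI.
Proof.
  unfold Dk. rewrite RInt_minusR. rewrite RInt_scalR.
  rewrite (RInt_sum (fun k s => cos (INR k * s))). rewrite Isumcos, RInt_constR. rfix; ring.
  intros; apply ct_cosl. apply (ct_sum (fun k s => cos (INR k * s))). intros; apply ct_cosl.
  apply ct_scal, (ct_sum (fun k s => cos (INR k * s))). intros; apply ct_cosl.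
  apply ct_const.
Qed.

Lemma IFk N : RInt (Fk N) 0 (2 * PI) = 2 * PI.
Proof.
  unfold Fk. rewrite RInt_scalR. rewrite (RInt_sum (fun n s => Dk n s)).
  rewrite (sum_eq _ (fun _ => 2 * PI)). rewrite sum_cte. rfix; field.
  apply Rgt_not_eq, INR_S_pos.
  intros; apply IDk. intros; apply ct_Dk.
  apply (ct_sum (fun n s => Dk n s)); intros; apply ct_Dk.
Qed.

Lemma per_shift f a : CT f -> (forall s, f (s + 2 * PI) = f s) ->
  RInt f a (a + 2 * PI) = RInt f 0 (2 * PI).
Proof.
  intros Hf Hp.
  rewrite <- (RInt_ChaslesR f a 0 (a + 2 * PI)); auto.
  rewrite <- (RInt_ChaslesR f 0 (2 * PI) (a + 2 * PI)); auto.
  assert (E : RInt f (2 * PI) (a + 2 * PI) = RInt f 0 a).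
  { assert (H := RInt_comp_lin f 1 (2 * PI) 0 a).
    replace (1 * 0 + 2 * PI) with (2 * PI) in H by ring.
    replace (1 * a + 2 * PI) with (a + 2 * PI) in H by ring.
    rewrite <- H. apply RInt_ext; intros x _.
    unfold scal; simpl; unfold mult; simpl. rewrite !Rmult_1_l. apply Hp.
    apply ct_ex; auto. }
  rewrite E. rewrite (RInt_swapR f a 0); auto. rfix; ring.
Qed.

Lemma per_shift2 f a b : CT f -> (forall s, f (s + 2 * PI) = f s) ->
  RInt f a (a + 2 * PI) = RInt f b (b + 2 * PI).
Proof. intros; rewrite !per_shift; auto. Qed.

Lemma cv_refl (h : R -> R) x a b : CT h ->
  RInt (fun y => h (x - y)) a b = RInt h (x - b) (x - a).
Proof.
  intros Hh.
  assert (H := RInt_comp_lin h (-1) x a b).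
  rewrite (RInt_swapR h (x - b)); auto.
  replace (-1 * a + x) with (x - a) in H by ring.
  replace (-1 * b + x) with (x - b) in H by ring.
  rewrite <- H. 2: apply ct_ex; auto.
  rewrite (RInt_extR (fun y => scal (-1) (h (-1 * y + x))) (fun y => -1 * h (x - y))).
  rewrite RInt_scalR. rewrite m1R, Ropp_involutive. reflexivity.
  apply ct_comp; auto. apply ct_minus. apply ct_const. apply ct_id.
  intros y. unfold scal; simpl; unfold mult; simpl. f_equal. f_equal. ring.
Qed.


Definition periodic' (g : R -> R) := forall s, g (s + 2 * PI) = g s.

Definition Sn g n x := / PI * sum_f_R0 (fun k => cA g k * cos (INR k * x) + sB g k * sin (INR k * x)) n
  - / (2 * PI) * cA g 0.
Definition sig g N x := / INR (S N) * sum_f_R0 (fun n => Sn g n x) N.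

Ltac ctac :=
  first [ assumption
  | lazymatch goal with
  | |- CT (fun _ => ?c) => apply ct_const
  | |- CT (fun y => y) => apply ct_id
  | |- CT (Dk _) => apply ct_Dk
  | |- CT (Fk _) => apply ct_Fk
  | |- CT (fun y => sum_f_R0 (fun k => @?F k y) ?N) => apply (ct_sum F N); intros; ctac
  | |- CT (fun y => Rplus (@?f y) (@?g y)) => apply (ct_plus f g); ctac
  | |- CT (fun y => Rminus (@?f y) (@?g y)) => apply (ct_minus f g); ctac
  | |- CT (fun y => Rmult (@?f y) (@?g y)) => apply (ct_mult f g); ctac
  | |- CT (fun y => Ropp (@?f y)) => apply (ct_opp f); ctac
  | |- CT (fun y => sin (@?f y)) => apply (ct_sin f); ctac
  | |- CT (fun y => cos (@?f y)) => apply (ct_cos f); ctac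
  | |- CT (fun y => ?h (@?f y)) => apply (ct_comp f h); ctac
  end ].

Lemma PI_pos : 0 < PI. Proof. apply PI_RGT_0. Qed.

Lemma int_cosdiff g k x : CT g ->
  RInt (fun y => g y * cos (INR k * (x - y))) 0 (2 * PI) =
  cos (INR k * x) * cA g k + sin (INR k * x) * sB g k.
Proof.
  intros Hg.
  rewrite (RInt_extR _ (fun y => cos (INR k * x) * (g y * cos (INR k * y)) +
                                 sin (INR k * x) * (g y * sin (INR k * y)))).
  2: { intros y. replace (INR k * (x - y)) with (INR k * x - INR k * y) by ring.
       rewrite cos_minus. ring. }
  rewrite RInt_plusR, !RInt_scalR. reflexivity.
  all: ctac.
Qed.

Lemma ct_gDk g n x : CT g -> CT (fun y => g y * cos (INR n * (x - y))).
Proof. intros; apply ct_mult; auto. apply ct_cos. apply ct_scal. apply ct_minus.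
  apply ct_const. apply ct_id. Qed.

Lemma Sn_int g n x : CT g ->
  Sn g n x = / (2 * PI) * RInt (fun y => g y * Dk n (x - y)) 0 (2 * PI).
Proof.
  intros Hg.
  rewrite (RInt_extR _ (fun y => 2 * sum_f_R0 (fun k => g y * cos (INR k * (x - y))) n - g y)).
  2: { intros y; unfold Dk. rewrite Rmult_minus_distr_l, Rmult_1_r. f_equal.
       rewrite <- Rmult_assoc, (Rmult_comm _ 2), Rmult_assoc. f_equal.
       rewrite scal_sum. apply sum_eq; intros; ring. }
  rewrite RInt_minusR, RInt_scalR, (RInt_sum (fun k y => g y * cos (INR k * (x - y)))).
  rewrite (sum_eq _ (fun k => cos (INR k * x) * cA g k + sin (INR k * x) * sB g k)).
  2: intros; apply int_cosdiff; auto.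
  rewrite <- cA_0. unfold Sn.
  rewrite (sum_eq (fun k => cA g k * cos (INR k * x) + sB g k * sin (INR k * x))
                  (fun k => cos (INR k * x) * cA g k + sin (INR k * x) * sB g k)).
  2: intros; ring.
  field. apply Rgt_not_eq, PI_pos.
  all: try (intros; apply ct_gDk; auto).
  all: try (apply (ct_sum (fun k y => g y * cos (INR k * (x - y)))); intros; apply ct_gDk; auto).
  all: try (apply ct_scal; apply (ct_sum (fun k y => g y * cos (INR k * (x - y)))); intros; apply ct_gDk; auto). all: auto.
Qed.

Lemma ct_gD g n x : CT g -> CT (fun y => g y * Dk n (x - y)).
Proof. intros. apply ct_mult; auto. apply (ct_comp (fun y => x - y)). ctac. apply ct_Dk. Qed.

Lemma sig_int g N x : CT g ->
  sig g N x = / (2 * PI) * RInt (fun y => g y * Fk N (x - y)) 0 (2 * PI).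
Proof.
  intros Hg.
  rewrite (RInt_extR _ (fun y => / INR (S N) * sum_f_R0 (fun n => g y * Dk n (x - y)) N)).
  2: { intros y; unfold Fk. rewrite <- Rmult_assoc, (Rmult_comm (g y)), Rmult_assoc.
       f_equal. rewrite scal_sum. apply sum_eq; intros; ring. }
  rewrite RInt_scalR, (RInt_sum (fun n y => g y * Dk n (x - y))).
  unfold sig. rewrite (sum_eq (fun n => Sn g n x)
     (fun n => / (2 * PI) * RInt (fun y => g y * Dk n (x - y)) 0 (2 * PI))).
  2: intros; apply Sn_int; auto.
  rewrite sum_scal_l. ring.
  intros; apply ct_gD; auto.
  apply (ct_sum (fun n y => g y * Dk n (x - y))). intros; apply ct_gD; auto.
Qed.

Lemma ct_shiftF g N x : CT g -> CT (fun s => g (x - s) * Fk N s).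
Proof. intros. apply ct_mult. apply (ct_comp (fun s => x - s)). ctac. auto. apply ct_Fk. Qed.

Lemma sig_shift g N x : CT g -> periodic' g ->
  sig g N x = / (2 * PI) * RInt (fun s => g (x - s) * Fk N s) (- PI) PI.
Proof.
  intros Hg Hp. rewrite sig_int; auto. f_equal.
  set (h := fun s => g (x - s) * Fk N s).
  rewrite (RInt_extR _ (fun y => h (x - y))).
  2: { intros y; unfold h. f_equal. f_equal. ring. }
  rewrite cv_refl. 2: apply ct_shiftF; auto.
  replace (x - 0) with ((x - 2 * PI) + 2 * PI) by ring.
  rewrite (per_shift2 h _ (- PI)). f_equal. ring. apply ct_shiftF; auto.
  intros s; unfold h. rewrite Fk_per. f_equal.
  rewrite <- (Hp (x - (s + 2 * PI))). f_equal. ring.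
Qed.

Lemma IFk_sym N : RInt (Fk N) (- PI) PI = 2 * PI.
Proof.
  assert (E := per_shift (Fk N) (- PI) (ct_Fk N) (Fk_per N)).
  replace (- PI + 2 * PI) with PI in E by ring. rewrite E. apply IFk.
Qed.

Lemma sig_bound g N x B : CT g -> periodic' g -> (forall y, Rabs (g y) <= B) ->
  Rabs (sig g N x) <= B.
Proof.
  intros Hg Hp HB. rewrite sig_shift; auto.
  rewrite Rabs_mult, Rabs_right. 2: left; apply Rinv_0_lt_compat; pose proof PI_pos; lra.
  apply Rle_trans with (/ (2 * PI) * RInt (fun s => B * Fk N s) (- PI) PI).
  apply Rmult_le_compat_l. left; apply Rinv_0_lt_compat; pose proof PI_pos; lra.
  apply RInt_abs_le. pose proof PI_pos; lra. apply ct_shiftF; auto.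
  apply ct_scal, ct_Fk.
  intros s _. rewrite Rabs_mult, (Rabs_right (Fk N s)). apply Rmult_le_compat_r.
  apply Fk_nonneg. auto. apply Rle_ge, Fk_nonneg.
  rewrite RInt_scalR, IFk_sym. right. field. pose proof PI_pos; lra. apply ct_Fk.
Qed.

Lemma ct_cpt f x : CT f -> continuity_pt f x.
Proof. intros H. apply continuity_pt_filterlim. apply H. Qed.

Lemma sig_conv g x : CT g -> periodic' g -> forall eps, 0 < eps ->
  exists N, Rabs (sig g N x - g x) < eps.
Proof.
  intros Hg Hp eps Heps. pose proof PI_pos as HPI.
  set (phi := fun s => Rabs (g (x - s) - g x)).
  assert (Hphi : forall c, - PI <= c <= PI -> continuity_pt phi c).
  { intros c _. apply ct_cpt. unfold phi. intros z. apply continuous_comp.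
    apply (ct_minus (fun s => g (x - s)) (fun _ => g x)).
    apply (ct_comp (fun s => x - s)). ctac. auto. apply ct_const.
    apply continuous_comp. apply continuous_id. apply continuous_Rabs. }
  destruct (continuity_ab_maj phi (- PI) PI) as [Mx [HM1 HM2]]; auto. lra.
  set (M := phi Mx). assert (HM0 : 0 <= M) by (unfold M, phi; apply Rabs_pos).
  destruct (ct_eps g x Hg (eps / 2)) as [de [Hde1 Hde2]]. lra.
  set (d := Rmin de PI).
  assert (Hd : 0 < d) by (unfold d; apply Rmin_pos; lra).
  assert (Hd1 : cos d < 1).
  { assert (cos d < cos 0). apply cos_decreasing_1; try lra. unfold d.
    apply Rmin_r. rewrite cos_0 in H; lra. }
  set (K := 2 / (1 - cos d)).
  assert (HK : 0 < K) by (unfold K; apply Rdiv_lt_0_compat; lra).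
  destruct (INR_archimed (eps / 2) (M * K)) as [N HN]. lra.
  exists N.
  assert (HSN : INR N * (eps / 2) <= INR (S N) * (eps / 2)).
  { apply Rmult_le_compat_r. lra. apply le_INR; lia. }
  pose proof (INR_S_pos N) as HS.
  set (c := M * K / INR (S N)).
  assert (Hc : c < eps / 2).
  { unfold c. apply (Rmult_lt_reg_r (INR (S N))); auto. unfold Rdiv.
    rewrite Rmult_assoc, Rinv_l. lra. lra. }
  assert (Hc0 : 0 <= c) by (unfold c; apply Rmult_le_pos; [nra| left; apply Rinv_0_lt_compat; auto]).
  rewrite sig_shift; auto.
  assert (E : / (2 * PI) * RInt (fun s => g (x - s) * Fk N s) (- PI) PI - g x =
              / (2 * PI) * RInt (fun s => (g (x - s) - g x) * Fk N s) (- PI) PI).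
  { rewrite (RInt_extR (fun s => (g (x - s) - g x) * Fk N s)
              (fun s => g (x - s) * Fk N s - g x * Fk N s)).
    2: intros; ring.
    rewrite RInt_minusR, RInt_scalR, IFk_sym. field. lra.
    apply ct_Fk. apply ct_shiftF; auto. apply ct_scal, ct_Fk. }
  rewrite E. clear E.
  rewrite Rabs_mult, Rabs_right. 2: left; apply Rinv_0_lt_compat; lra.
  apply Rle_lt_trans with (/ (2 * PI) * RInt (fun s => eps / 2 * Fk N s + c) (- PI) PI).
  - apply Rmult_le_compat_l. left; apply Rinv_0_lt_compat; lra.
    apply RInt_abs_le. lra. apply ct_mult. apply (ct_minus (fun s => g (x - s)) (fun _ => g x)).
    apply (ct_comp (fun s => x - s)). ctac. auto. apply ct_const. apply ct_Fk.
    apply ct_plus. apply ct_scal, ct_Fk. apply ct_const.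
    intros s Hs. rewrite Rabs_mult, (Rabs_right (Fk N s)). 2: apply Rle_ge, Fk_nonneg.
    pose proof (Fk_nonneg N s).
    destruct (Rlt_or_le (Rabs s) d) as [Hs1|Hs1].
    + assert (Rabs (g (x - s) - g x) < eps / 2).
      { apply Hde2. replace (x - s - x) with (- s) by ring. rewrite Rabs_Ropp.
        apply Rlt_le_trans with d; auto. apply Rmin_l. }
      nra.
    + assert (Fk N s <= K / INR (S N)).
      { unfold K. replace (2 / (1 - cos d) / INR (S N)) with (2 / (INR (S N) * (1 - cos d))).
        apply Fk_small; auto. unfold Rabs; destruct (Rcase_abs s); lra.
        field. split; lra. }
      assert (phi s <= M) by (apply HM1; lra).
      unfold phi in H1.
      assert (Rabs (g (x - s) - g x) * Fk N s <= M * (K / INR (S N))).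
      { apply Rmult_le_compat; auto. apply Rabs_pos. }
      unfold c. unfold Rdiv in *. nra.
  - rewrite RInt_plusR, RInt_scalR, IFk_sym, RInt_constR.
    replace (/ (2 * PI) * (eps / 2 * (2 * PI) + (PI - - PI) * c)) with (eps / 2 + c).
    lra. field. lra.
    apply ct_Fk. apply ct_scal, ct_Fk. apply ct_const.
Qed.

Lemma acbs a b x : Rabs (a * cos x + b * sin x) <= sqrt (a ^ 2 + b ^ 2).
Proof.
  rewrite <- sqrt_Rsqr_abs. apply sqrt_le_1_alt.
  pose proof (sin2_cos2 x). unfold Rsqr in *.
  assert (0 <= (a * sin x - b * cos x) ^ 2) by apply pow2_ge_0.
  nra.
Qed.

Definition cc g k := sqrt (cA g k ^ 2 + sB g k ^ 2) / PI.

Lemma cc_nonneg g k : 0 <= cc g k.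
Proof. unfold cc. apply Rmult_le_pos. apply sqrt_pos. left; apply Rinv_0_lt_compat, PI_pos. Qed.

Lemma Sn_bound g n x : Rabs (Sn g n x) <= sum_f_R0 (cc g) n + Rabs (cA g 0) / (2 * PI).
Proof.
  pose proof PI_pos. unfold Sn.
  eapply Rle_trans. apply Rabs_triang. rewrite Rabs_Ropp, !Rabs_mult.
  rewrite (Rabs_right (/ PI)), (Rabs_right (/ (2 * PI))).
  2,3: left; apply Rinv_0_lt_compat; lra.
  apply Rplus_le_compat. 2: right; unfold Rdiv; ring.
  eapply Rle_trans. apply Rmult_le_compat_l. left; apply Rinv_0_lt_compat; lra.
  apply sum_f_R0_triangle.
  rewrite <- sum_scal_l. apply sum_Rle. intros k _. unfold cc. unfold Rdiv.
  rewrite Rmult_comm. apply Rmult_le_compat_r. left; apply Rinv_0_lt_compat; lra.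
  rewrite !(Rmult_comm (cA g k)), !(Rmult_comm (sB g k)).
  rewrite (Rmult_comm (cos _)), (Rmult_comm (sin _)). apply acbs.
Qed.

Lemma sig_bound2 g N x B : (forall n, Rabs (Sn g n x) <= B) -> Rabs (sig g N x) <= B.
Proof.
  intros H. unfold sig. pose proof (INR_S_pos N).
  rewrite Rabs_mult, Rabs_right. 2: left; apply Rinv_0_lt_compat; auto.
  eapply Rle_trans. apply Rmult_le_compat_l. left; apply Rinv_0_lt_compat; auto.
  eapply Rle_trans. apply sum_f_R0_triangle. apply (sum_Rle _ (fun _ => B)). intros; apply H.
  rewrite sum_cte. right. field. lra.
Qed.

Lemma sup_lemma g x : CT g -> periodic' g -> ex_series (cc g) ->
  Rabs (g x) <= Series (cc g) + Rabs (cA g 0) / (2 * PI).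
Proof.
  intros Hg Hp Hs. apply le_epsilon. intros eps Heps.
  destruct (sig_conv g x Hg Hp eps Heps) as [N HN].
  assert (Rabs (sig g N x) <= Series (cc g) + Rabs (cA g 0) / (2 * PI)).
  { apply sig_bound2. intros n. eapply Rle_trans. apply Sn_bound.
    apply Rplus_le_compat_r. apply psum_le; auto. apply cc_nonneg. }
  assert (Rabs (g x) <= Rabs (sig g N x) + Rabs (sig g N x - g x)).
  { replace (g x) with (sig g N x - (sig g N x - g x)) at 1 by ring.
    eapply Rle_trans. apply Rabs_triang. rewrite Rabs_Ropp. lra. }
  lra.
Qed.

Lemma ct_Sn g n : CT (Sn g n).
Proof.
  unfold Sn. apply (ct_minus (fun x => / PI * _) (fun _ => _)). apply ct_scal.
  apply (ct_sum (fun k x => cA g k * cos (INR k * x) + sB g k * sin (INR k * x))).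
  intros k. ctac. apply ct_const.
Qed.

Lemma int_gSn g n : CT g ->
  RInt (fun x => g x * Sn g n x) 0 (2 * PI) =
  / PI * sum_f_R0 (fun k => cA g k ^ 2 + sB g k ^ 2) n - / (2 * PI) * cA g 0 ^ 2.
Proof.
  intros Hg.
  rewrite (RInt_extR _ (fun x => / PI * sum_f_R0 (fun k => cA g k * (g x * cos (INR k * x)) +
                                                     sB g k * (g x * sin (INR k * x))) n
                                 - / (2 * PI) * cA g 0 * g x)).
  2: { intros x; unfold Sn. rewrite Rmult_minus_distr_l. f_equal.
       rewrite <- Rmult_assoc, (Rmult_comm (g x)), Rmult_assoc. f_equal.
       rewrite <- sum_scal_l. apply sum_eq; intros; ring. ring. }
  rewrite RInt_minusR, RInt_scalR, RInt_scalR.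
  rewrite (RInt_sum (fun k x => cA g k * (g x * cos (INR k * x)) + sB g k * (g x * sin (INR k * x)))).
  rewrite (sum_eq _ (fun k => cA g k ^ 2 + sB g k ^ 2)).
  rewrite <- cA_0. rfix; ring.
  intros k _. rewrite RInt_plusR, !RInt_scalR. fold (cA g k) (sB g k). rfix; ring.
  all: try (intros; ctac).
Qed.

Lemma sum_ge_last (a : nat -> R) M : (forall n, 0 <= a n) -> a M <= sum_f_R0 a M.
Proof.
  intros H. destruct M. simpl; lra. rewrite tech5.
  pose proof (cond_pos_sum a M H). lra.
Qed.

Lemma mono_le (E : nat -> R) : (forall n, E n <= E (S n)) -> forall M k, E M <= E (M + k)%nat.
Proof.
  intros H M k. induction k. rewrite Nat.add_0_r; lra.
  replace (M + S k)%nat with (S (M + k)) by lia. specialize (H (M + k)%nat). lra.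
Qed.

Lemma sumE_ge (E : nat -> R) M : (forall n, 0 <= E n) -> (forall n, E n <= E (S n)) ->
  forall j, INR (S j) * E M <= sum_f_R0 E (M + j).
Proof.
  intros H0 H1 j. induction j.
  - rewrite Nat.add_0_r. simpl INR. rewrite Rmult_1_l. apply sum_ge_last; auto.
  - replace (M + S j)%nat with (S (M + j)) by lia. rewrite tech5.
    pose proof (mono_le E H1 M (S j)). replace (M + S j)%nat with (S (M + j)) in H by lia.
    rewrite S_INR. lra.
Qed.

Lemma bessel_like g : CT g -> periodic' g -> (forall x, Rabs (g x) <= 1) ->
  forall M, sum_f_R0 (fun k => cA g k ^ 2 + sB g k ^ 2) M <= 8 * PI ^ 2.
Proof.
  intros Hg Hp H1 M. pose proof PI_pos as HPI.
  set (e := fun k => cA g k ^ 2 + sB g k ^ 2).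
  set (E := fun n => sum_f_R0 e n).
  assert (He : forall k, 0 <= e k) by (intros; unfold e; nra).
  assert (HE0 : forall n, 0 <= E n) by (intros; apply cond_pos_sum; auto).
  assert (HE1 : forall n, E n <= E (S n)) by (intros; unfold E; rewrite tech5; specialize (He (S n)); lra).
  set (N := (M + S M)%nat).
  assert (I1 : RInt (fun x => g x * sig g N x) 0 (2 * PI) <= 2 * PI).
  { apply Rle_trans with (RInt (fun _ => 1) 0 (2 * PI)).
    apply RInt_le_R. lra. apply ct_mult; auto.
    unfold sig. apply ct_scal. apply (ct_sum (fun n x => Sn g n x)). intros; apply ct_Sn.
    apply ct_const. intros x _.
    apply Rle_trans with (Rabs (g x * sig g N x)). apply Rle_abs.
    rewrite Rabs_mult. assert (Rabs (sig g N x) <= 1) by (apply sig_bound; auto).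
    specialize (H1 x). pose proof (Rabs_pos (g x)). pose proof (Rabs_pos (sig g N x)). nra.
    rewrite RInt_constR. lra. }
  assert (I2 : RInt (fun x => g x * sig g N x) 0 (2 * PI) =
               / INR (S N) * sum_f_R0 (fun n => RInt (fun x => g x * Sn g n x) 0 (2 * PI)) N).
  { rewrite (RInt_extR _ (fun x => / INR (S N) * sum_f_R0 (fun n => g x * Sn g n x) N)).
    rewrite RInt_scalR, (RInt_sum (fun n x => g x * Sn g n x)). reflexivity.
    intros; apply ct_mult; auto; apply ct_Sn.
    apply (ct_sum (fun n x => g x * Sn g n x)). intros; apply ct_mult; auto; apply ct_Sn.
    intros x; unfold sig. rewrite <- Rmult_assoc, (Rmult_comm (g x)), Rmult_assoc. f_equal.
    rewrite <- sum_scal_l. reflexivity. }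
  assert (I3 : forall n, / (2 * PI) * E n <= RInt (fun x => g x * Sn g n x) 0 (2 * PI)).
  { intros n. rewrite int_gSn; auto. fold e. fold (E n).
    assert (cA g 0 ^ 2 <= E n). { apply Rle_trans with (e 0%nat). unfold e; nra.
      unfold E. apply Rle_trans with (sum_f_R0 e 0). simpl; lra.
      apply (mono_le E HE1 0 n). }
    assert (/ (2 * PI) * cA g 0 ^ 2 <= / (2 * PI) * E n).
    { apply Rmult_le_compat_l; auto. left; apply Rinv_0_lt_compat; lra. }
    replace (/ PI) with (2 * / (2 * PI)) by (field; lra). lra. }
  assert (I4 : INR (S (S M)) * E M <= sum_f_R0 E N) by (apply sumE_ge; auto).
  assert (I5 : / INR (S N) * (/ (2 * PI) * sum_f_R0 E N) <= 2 * PI).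
  { rewrite I2 in I1. eapply Rle_trans. 2: exact I1.
    apply Rmult_le_compat_l. left; apply Rinv_0_lt_compat, INR_S_pos.
    rewrite <- sum_scal_l. apply sum_Rle. intros; apply I3. }
  fold e. fold (E M).
  assert (HN : INR (S N) = 2 * INR (S M)) by (unfold N; rewrite !S_INR, plus_INR, S_INR; ring).
  rewrite HN in I5.
  assert (HSM := INR_S_pos M).
  assert (INR (S (S M)) >= INR (S M)) by (rewrite (S_INR (S M)); lra).
  assert (E M * INR (S M) <= sum_f_R0 E N).
  { pose proof (HE0 M). assert (0 <= (INR (S (S M)) - INR (S M)) * E M) by (apply Rmult_le_pos; lra).
    lra. }
  assert (sum_f_R0 E N <= 2 * PI * (2 * INR (S M)) * (2 * PI)).
  { apply (Rmult_le_compat_l (2 * INR (S M) * (2 * PI))) in I5. 2: nra.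
    replace (2 * INR (S M) * (2 * PI) * (/ (2 * INR (S M)) * (/ (2 * PI) * sum_f_R0 E N)))
      with (sum_f_R0 E N) in I5 by (field; lra). nra. }
  nra.
Qed.


Definition wz (n : nat) := / (1 + INR (S n) ^ 2).

Lemma wz_pos n : 0 < wz n.
Proof. unfold wz. apply Rinv_0_lt_compat. pose proof (pos_INR (S n)). nra. Qed.

Lemma tele N : sum_f_R0 (fun n => / (INR n + 1) - / (INR n + 2)) N = 1 - / (INR N + 2).
Proof.
  induction N. simpl. field.
  rewrite tech5, IHN, S_INR. field. pose proof (pos_INR N). lra.
Qed.

Lemma ex_wz : ex_series wz.
Proof.
  apply (ex_series_bounded _ 2). intros; left; apply wz_pos.
  intros N. eapply Rle_trans. apply (sum_Rle _ (fun n => 2 * (/ (INR n + 1) - / (INR n + 2)))).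
  - intros n _. unfold wz. rewrite S_INR. pose proof (pos_INR n).
    replace (2 * (/ (INR n + 1) - / (INR n + 2))) with (/ ((INR n + 1) * (INR n + 2) / 2)) by (field; lra).
    apply Rinv_le_contravar. nra. nra.
  - rewrite sum_scal_l, tele. pose proof (pos_INR N).
    assert (0 < / (INR N + 2)) by (apply Rinv_0_lt_compat; lra). lra.
Qed.

Definition Zc := Series wz.
Definition KH := 3 + (1 + 2 * PI ^ 2 * Zc) / (2 * PI).

Lemma Zc_nonneg : 0 <= Zc.
Proof. apply ser_nonneg. intros; left; apply wz_pos. apply ex_wz. Qed.

Lemma amgm y l b : 0 <= y -> 0 < l -> 0 < b -> 2 * y <= l * b * y ^ 2 + / (l * b).
Proof.
  intros Hy Hl Hb. assert (0 < l * b) by nra.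
  assert (0 <= l * b * (y - / (l * b)) ^ 2) by (apply Rmult_le_pos; [lra | apply pow2_ge_0]).
  replace (l * b * (y - / (l * b)) ^ 2) with (l * b * y ^ 2 - 2 * y + / (l * b)) in H0.
  lra. field. lra.
Qed.

Lemma cc_S_bound v n l : CT v -> 0 < l ->
  cc v (S n) <= (l * H1_tail v n + 2 * PI ^ 2 / l * wz n) / (2 * PI).
Proof.
  intros Hv Hl. pose proof PI_pos. rewrite H1_tail_real; auto.
  unfold cc. set (X := cA v (S n) ^ 2 + sB v (S n) ^ 2).
  assert (HX : 0 <= X) by (unfold X; nra).
  set (b := (1 + INR (S n) ^ 2) / (2 * PI ^ 2)).
  assert (Hb : 0 < b). { unfold b. pose proof (pos_INR (S n)). apply Rdiv_lt_0_compat; nra. }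
  assert (A := amgm (sqrt X) l b (sqrt_pos X) Hl Hb).
  rewrite pow2_sqrt in A; auto.
  unfold wz. replace ((1 + INR (S n) ^ 2) * (2 * (/ (2 * PI)) ^ 2 * X)) with (b * X).
  2: unfold b; field; lra.
  replace (2 * PI ^ 2 / l * / (1 + INR (S n) ^ 2)) with (/ (l * b)).
  2: unfold b; field; split; [pose proof (pos_INR (S n)); nra | lra].
  apply (Rmult_le_reg_r (2 * PI)). lra.
  replace ((l * (b * X) + / (l * b)) / (2 * PI) * (2 * PI)) with (l * b * X + / (l * b)) by (field; lra).
  replace (sqrt X / PI * (2 * PI)) with (2 * sqrt X) by (field; lra). lra.
Qed.

Lemma H1norm_facts v : CT v -> ex_series (H1_tail v) ->
  0 <= H1norm v /\ Rabs (cA v 0) / (2 * PI) <= H1norm v /\ Series (H1_tail v) <= H1norm v ^ 2.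
Proof.
  intros Hv Hs. pose proof PI_pos.
  assert (HT : 0 <= Series (H1_tail v)).
  { apply ser_nonneg; auto. intros n. rewrite H1_tail_real; auto.
    pose proof (pos_INR (S n)). apply Rmult_le_pos. nra.
    apply Rmult_le_pos. apply Rmult_le_pos. lra. apply pow2_ge_0. nra. }
  unfold H1norm. rewrite fourier_0, sB_0, Cmod2; auto.
  set (a := / (2 * PI) * cA v 0).
  replace (/ (2 * PI) * - 0) with 0 by ring.
  assert (Ha : Rabs (cA v 0) / (2 * PI) = Rabs a).
  { unfold a. rewrite Rabs_mult, (Rabs_right (/ (2 * PI))). unfold Rdiv; ring.
    left; apply Rinv_0_lt_compat; lra. }
  rewrite Ha.
  split. apply sqrt_pos. split.
  - rewrite <- sqrt_Rsqr_abs. apply sqrt_le_1_alt. unfold Rsqr. nra.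
  - rewrite pow2_sqrt. nra. nra.
Qed.

Lemma sup_H1 v : CT v -> periodic' v -> ex_series (H1_tail v) ->
  forall x, Rabs (v x) <= KH * H1norm v.
Proof.
  intros Hv Hp Hs x. pose proof PI_pos as HPI.
  destruct (H1norm_facts v Hv Hs) as [Hn0 [Hn1 Hn2]].
  set (Hn := H1norm v) in *.
  assert (Zc0 := Zc_nonneg).
  assert (G : forall l, 0 < l ->
             Rabs (v x) <= 3 * Hn + (l * Hn ^ 2 + 2 * PI ^ 2 / l * Zc) / (2 * PI)).
  { intros l Hl.
    set (m := fun n => (l * H1_tail v n + 2 * PI ^ 2 / l * wz n) / (2 * PI)).
    assert (Hm : ex_series m).
    { unfold m. apply exR_div.
      apply (exR_plus (fun n => l * H1_tail v n) (fun n => 2 * PI ^ 2 / l * wz n)).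
      apply exR_scal. auto. apply exR_scal. apply ex_wz. }
    assert (Hc : ex_series (fun n => cc v (S n))).
    { apply (@ex_series_le R_AbsRing R_CompleteNormedModule _ m); auto. intros n. change norm with Rabs. rewrite Rabs_right.
      apply cc_S_bound; auto. apply Rle_ge, cc_nonneg. }
    assert (Hc' : ex_series (cc v)) by (apply ex_series_incr_1; auto).
    eapply Rle_trans. apply sup_lemma; auto.
    rewrite Series_incr_1; auto.
    assert (E0 : cc v 0 = Rabs (cA v 0) / PI).
    { unfold cc. rewrite sB_0. f_equal. rewrite <- sqrt_Rsqr_abs. f_equal. unfold Rsqr; ring. }
    rewrite E0.
    assert (Series (fun n => cc v (S n)) <= Series m).
    { apply Series_le; auto. intros n; split. apply cc_nonneg. apply cc_S_bound; auto. }
    assert (Em : Series m = (l * Series (H1_tail v) + 2 * PI ^ 2 / l * Zc) / (2 * PI)).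
    { unfold m, Zc.
      rewrite (Series_ext _ (fun n => / (2 * PI) * (l * H1_tail v n + 2 * PI ^ 2 / l * wz n))).
      2: intros; unfold Rdiv; ring.
      rewrite Series_scal_l.
      rewrite (Series_plus (fun n => l * H1_tail v n) (fun n => 2 * PI ^ 2 / l * wz n)).
      rewrite !Series_scal_l. unfold Rdiv; rfix; ring.
      apply exR_scal. auto. apply exR_scal. apply ex_wz. }
    assert (Rabs (cA v 0) / PI = 2 * (Rabs (cA v 0) / (2 * PI))) by (field; lra).
    assert ((l * Series (H1_tail v) + 2 * PI ^ 2 / l * Zc) / (2 * PI) <=
            (l * Hn ^ 2 + 2 * PI ^ 2 / l * Zc) / (2 * PI)).
    { unfold Rdiv. apply Rmult_le_compat_r. left; apply Rinv_0_lt_compat; lra.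
      apply Rplus_le_compat_r. apply Rmult_le_compat_l; lra. }
    lra. }
  destruct (Req_dec Hn 0) as [H0|H0].
  - rewrite H0, Rmult_0_r. apply le_epsilon. intros eps Heps.
    set (l := PI * Zc / eps + 1).
    assert (Hl : 0 < l). { unfold l. assert (0 <= PI * Zc / eps). apply Rmult_le_pos. nra.
      left; apply Rinv_0_lt_compat; auto. lra. }
    specialize (G l Hl). rewrite H0 in G.
    assert (2 * PI ^ 2 / l * Zc / (2 * PI) <= eps).
    { replace (2 * PI ^ 2 / l * Zc / (2 * PI)) with (PI * Zc / l) by (field; lra).
      apply (Rmult_le_reg_r l); auto. unfold Rdiv. rewrite Rmult_assoc, Rinv_l. 2: lra.
      assert (El : eps * l = PI * Zc + eps) by (unfold l; field; lra).
      rewrite El. lra. }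
    replace (3 * 0 + (l * 0 ^ 2 + 2 * PI ^ 2 / l * Zc) / (2 * PI)) with
      (2 * PI ^ 2 / l * Zc / (2 * PI)) in G by (field; lra). lra.
  - assert (Hp0 : 0 < Hn) by lra.
    specialize (G (/ Hn) (Rinv_0_lt_compat _ Hp0)).
    replace (3 * Hn + (/ Hn * Hn ^ 2 + 2 * PI ^ 2 / / Hn * Zc) / (2 * PI)) with (KH * Hn) in G.
    auto. unfold KH. field. lra.
Qed.


Definition term g n x :=
  (cA g (S n) * sin (INR (S n) * x) - sB g (S n) * cos (INR (S n) * x)) / (PI * INR (S n)).

Lemma abs_div_k a k : 0 < k -> 2 * (Rabs a / k) <= a ^ 2 + / k ^ 2.
Proof.
  intros Hk. assert (0 <= (Rabs a - / k) ^ 2) by apply pow2_ge_0.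
  replace ((Rabs a - / k) ^ 2) with (Rabs a ^ 2 - 2 * (Rabs a / k) + / k ^ 2) in H.
  rewrite <- Rsqr_pow2, <- Rsqr_abs, Rsqr_pow2 in H. lra.
  field. lra.
Qed.

Lemma term_bound g n x :
  Rabs (term g n x) <= (cA g (S n) ^ 2 + sB g (S n) ^ 2 + 4 * wz n) / (2 * PI).
Proof.
  pose proof PI_pos as HPI. pose proof (INR_S_pos n) as Hk.
  set (k := INR (S n)) in *.
  assert (Hw : / k ^ 2 <= 2 * wz n).
  { unfold wz. fold k. replace (2 * / (1 + k ^ 2)) with (/ ((1 + k ^ 2) / 2)) by (field; nra).
    apply Rinv_le_contravar. nra. unfold k. rewrite S_INR. pose proof (pos_INR n). nra. }
  unfold term. fold k. unfold Rdiv. rewrite Rabs_mult.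
  rewrite Rabs_inv. rewrite Rabs_mult, (Rabs_right PI), (Rabs_right k). 2,3: lra.
  assert (A1 : Rabs (cA g (S n) * sin (k * x) - sB g (S n) * cos (k * x)) <= Rabs (cA g (S n)) + Rabs (sB g (S n))).
  { eapply Rle_trans. apply Rabs_triang. rewrite Rabs_Ropp, !Rabs_mult.
    pose proof (Rabs_pos (cA g (S n))). pose proof (Rabs_pos (sB g (S n))).
    assert (Rabs (sin (k * x)) <= 1) by (apply Rabs_le; apply SIN_bound).
    assert (Rabs (cos (k * x)) <= 1) by (apply Rabs_le; apply COS_bound).
    pose proof (Rabs_pos (sin (k * x))). pose proof (Rabs_pos (cos (k * x))). nra. }
  pose proof (abs_div_k (cA g (S n)) k Hk). pose proof (abs_div_k (sB g (S n)) k Hk).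
  rewrite Rinv_mult.
  assert (0 < / PI) by (apply Rinv_0_lt_compat; lra).
  assert (0 < / k) by (apply Rinv_0_lt_compat; lra).
  replace ((cA g (S n) ^ 2 + sB g (S n) ^ 2 + 4 * wz n) * / (2 * PI)) with
          (/ PI * ((cA g (S n) ^ 2 + sB g (S n) ^ 2 + 4 * wz n) / 2)) by (field; lra).
  rewrite (Rmult_comm (/ PI)), <- Rmult_assoc, (Rmult_comm _ (/ PI)).
  apply Rmult_le_compat_l. lra.
  unfold Rdiv in *.
  apply Rle_trans with ((Rabs (cA g (S n)) + Rabs (sB g (S n))) * / k).
  apply Rmult_le_compat_r; lra. lra.
Qed.

Lemma ct_term g n : CT (term g n).
Proof. unfold term. unfold Rdiv. ctac. Qed.

Lemma int_g_term g n : CT g -> RInt (fun x => g x * term g n x) 0 (2 * PI) = 0.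
Proof.
  intros Hg. pose proof PI_pos. pose proof (INR_S_pos n).
  rewrite (RInt_extR _ (fun x => / (PI * INR (S n)) *
     (cA g (S n) * (g x * sin (INR (S n) * x)) - sB g (S n) * (g x * cos (INR (S n) * x))))).
  2: intros; unfold term; field; nra.
  rewrite RInt_scalR, RInt_minusR, !RInt_scalR. fold (cA g (S n)) (sB g (S n)). rfix; ring.
  all: ctac.
Qed.

Lemma dagger_term g x : CT g -> dagger g x = Series (fun n => term g n x).
Proof. intros; rewrite dagger_real; auto. Qed.

Lemma dagger_zero g : CT g -> periodic' g -> (forall x, Rabs (g x) <= 1) -> CT (dagger g) ->
  RInt (fun x => g x * dagger g x) 0 (2 * PI) = 0.
Proof.
  intros Hg Hp H1 Hd. pose proof PI_pos as HPI.
  set (e := fun k => cA g k ^ 2 + sB g k ^ 2).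
  assert (He : ex_series e).
  { apply (ex_series_bounded _ (8 * PI ^ 2)). intros; unfold e; apply Rplus_le_le_0_compat; apply pow2_ge_0.
    intros N; exact (bessel_like g Hg Hp H1 N). }
  set (m := fun n => (e (S n) + 4 * wz n) / (2 * PI)).
  assert (Hm : ex_series m).
  { unfold m. apply exR_div. apply (exR_plus (fun n => e (S n)) (fun n => 4 * wz n)).
    apply (ex_series_incr_1 e). auto. apply exR_scal, ex_wz. }
  assert (Hm0 : forall n, 0 <= m n).
  { intros n; unfold m, e. apply Rmult_le_pos. pose proof (wz_pos n).
    pose proof (pow2_ge_0 (cA g (S n))). pose proof (pow2_ge_0 (sB g (S n))). lra.
    left; apply Rinv_0_lt_compat; lra. }
  assert (Htb : forall n x, Rabs (term g n x) <= m n) by (intros; apply term_bound).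
  assert (Tail : forall N x, Rabs (dagger g x - sum_f_R0 (fun n => term g n x) N) <=
                             Series m - sum_f_R0 m N).
  { intros N x. rewrite (dagger_term g x Hg).
    assert (Ht : ex_series (fun n => term g n x)).
    { apply (@ex_series_le R_AbsRing R_CompleteNormedModule _ m). intros n; apply (Htb n x). exact Hm. }
    rewrite (Series_incr_n (fun n => term g n x) (S N)); [| lia | exact Ht].
    rewrite (Series_incr_n m (S N)); [| lia | exact Hm].
    change (Init.Nat.pred (S N)) with N.
    match goal with |- Rabs (?A + ?B - ?A) <= ?C + ?D - ?C =>
      replace (A + B - A) with B by ring; replace (C + D - C) with D by ring end.
    assert (Hmt := ex_series_tail m (S N) Hm).
    eapply Rle_trans. apply Series_Rabs.
    apply (@ex_series_le R_AbsRing R_CompleteNormedModule _ (fun k => m (S N + k)%nat)).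
    intros n. change norm with Rabs. rewrite Rabs_Rabsolu. apply Htb. exact Hmt.
    apply Series_le. intros n; split; [apply Rabs_pos | apply Htb]. exact Hmt. }
  assert (Ct : forall N, CT (fun x => sum_f_R0 (fun n => term g n x) N)).
  { intros N. apply (ct_sum (fun n x => term g n x)). intros; apply ct_term. }
  assert (Z : forall N, RInt (fun x => g x * sum_f_R0 (fun n => term g n x) N) 0 (2 * PI) = 0).
  { intros N. rewrite (RInt_extR _ (fun x => sum_f_R0 (fun n => g x * term g n x) N)).
    rewrite (RInt_sum (fun n x => g x * term g n x)).
    rewrite (sum_eq _ (fun _ => 0)). rewrite sum_cte. rfix; ring.
    intros n _. apply int_g_term. exact Hg.
    intros n. apply ct_mult. exact Hg. apply ct_term.
    intros x. rewrite scal_sum. apply sum_eq. intros; ring. }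
  set (I := RInt (fun x => g x * dagger g x) 0 (2 * PI)).
  assert (HI : Rabs I <= 0).
  { apply le_epsilon. intros eps Heps.
    destruct (tail_small m Hm (eps / (2 * PI))) as [N HN].
    apply Rdiv_lt_0_compat; lra.
    specialize (HN N (le_n N)).
    assert (E : I = RInt (fun x => g x * (dagger g x - sum_f_R0 (fun n => term g n x) N)) 0 (2 * PI)).
    { rewrite (RInt_extR _ (fun x => g x * dagger g x - g x * sum_f_R0 (fun n => term g n x) N)).
      rewrite RInt_minusR. rewrite Z. unfold I. rewrite Rminus_0_r. reflexivity.
      apply ct_mult. exact Hg. exact Hd.
      apply ct_mult. exact Hg. apply Ct.
      intros; ring. }
    rewrite E.
    eapply Rle_trans. apply (RInt_abs_le _ (fun _ => Series m - sum_f_R0 m N)).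
    lra. apply ct_mult. exact Hg. apply ct_minus. exact Hd. apply Ct. apply ct_const.
    intros x _. rewrite Rabs_mult.
    pose proof (Tail N x). pose proof (H1 x). pose proof (Rabs_pos (g x)).
    pose proof (Rabs_pos (dagger g x - sum_f_R0 (fun n => term g n x) N)).
    apply Rle_trans with (1 * Rabs (dagger g x - sum_f_R0 (fun n => term g n x) N)).
    apply Rmult_le_compat_r; assumption. lra.
    rewrite RInt_constR.
    assert (Series m - sum_f_R0 m N <= eps / (2 * PI)).
    { apply Rle_trans with (Rabs (Series m - sum_f_R0 m N)). apply Rle_abs. lra. }
    apply Rle_trans with ((2 * PI - 0) * (eps / (2 * PI))).
    apply Rmult_le_compat_l. lra. exact H.
    right. field. lra. }
  pose proof (Rabs_pos I). assert (Rabs I = 0) by lra.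
  apply Rabs_eq_0 in H0. exact H0.
Qed.


Lemma der_cpt f x l : is_derive f x l -> continuity_pt f x.
Proof.
  intros H. apply continuity_pt_filterlim. apply (ex_derive_continuous f x). exists l; exact H.
Qed.

Lemma lip1 (f f' : R -> R) L : (forall x, is_derive f x (f' x)) -> (forall x, Rabs (f' x) <= L) ->
  forall a b, Rabs (f b - f a) <= L * Rabs (b - a).
Proof.
  intros Hd HL a b.
  destruct (MVT_gen f a b f') as [c [Hc E]].
  intros; apply Hd. intros; eapply der_cpt; apply Hd.
  rewrite E, Rabs_mult. apply Rmult_le_compat_r. apply Rabs_pos. apply HL.
Qed.

Lemma taylor2 (F G H : R -> R) : (forall x, is_derive F x (G x)) -> (forall x, is_derive G x (H x)) ->
  (forall x, Rabs (H x) <= 1) -> forall y d, Rabs (F (y + d) - F y - G y * d) <= d ^ 2.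
Proof.
  intros HF HG HH y d.
  set (phi := fun s => F (y + s) - F y - G y * s).
  set (dphi := fun s => G (y + s) - G y).
  assert (Hphi : forall s, is_derive phi s (dphi s)).
  { intros s. unfold phi, dphi. auto_derive.
    exists (G (y + s)); apply HF.
    replace (Derive (fun x : R => F x) (y + s)) with (G (y + s)). ring. symmetry; apply is_derive_unique; apply HF. }
  destruct (MVT_gen phi 0 d dphi) as [c [Hc E]].
  intros; apply Hphi. intros; eapply der_cpt; apply Hphi.
  assert (E0 : phi 0 = 0) by (unfold phi; rewrite Rplus_0_r; ring).
  rewrite E0, Rminus_0_r, Rminus_0_r in E.
  change (Rabs (phi d) <= d ^ 2). rewrite E, Rabs_mult.
  assert (Hc' : Rabs c <= Rabs d).
  { pose proof (Rabs_le_between_min_max 0 d c). unfold Rmin, Rmax in *.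
    destruct (Rle_dec 0 d); unfold Rabs; destruct (Rcase_abs c); destruct (Rcase_abs d); lra. }
  assert (Hd : Rabs (dphi c) <= Rabs c).
  { unfold dphi. assert (L := lip1 G H 1 HG HH y (y + c)). 
    replace (y + c - y) with c in L by ring. lra. }
  rewrite <- Rsqr_pow2, Rsqr_abs, Rsqr_pow2. simpl. rewrite Rmult_1_r.
  apply Rmult_le_compat_r. apply Rabs_pos. lra.
Qed.

Lemma taylor_sin y d : Rabs (sin (y + d) - sin y - cos y * d) <= d ^ 2.
Proof.
  apply (taylor2 sin cos (fun x => - sin x)). apply is_derive_sin. apply is_derive_cos.
  intros x. rewrite Rabs_Ropp. apply Rabs_le, SIN_bound.
Qed.

Lemma taylor_cos y d : Rabs (cos (y + d) - cos y - (- sin y) * d) <= d ^ 2.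
Proof.
  apply (taylor2 cos (fun x => - sin x) (fun x => - cos x)). apply is_derive_cos.
  intros x. apply (is_derive_opp sin). apply is_derive_sin.
  intros x. rewrite Rabs_Ropp. apply Rabs_le, COS_bound.
Qed.

Lemma sq3 x y z : (x + y + z) ^ 2 <= 3 * (x ^ 2 + y ^ 2 + z ^ 2).
Proof. assert (0 <= (x - y) ^ 2 + (y - z) ^ 2 + (x - z) ^ 2) by (repeat apply Rplus_le_le_0_compat; apply pow2_ge_0). nra. Qed.

Lemma cA_lin (a b c : R -> R) al be ga k : CT a -> CT b -> CT c ->
  cA (fun x => al * a x + be * b x + ga * c x) k = al * cA a k + be * cA b k + ga * cA c k.
Proof.
  intros Ha Hb Hc. unfold cA.
  rewrite (RInt_extR _ (fun x => (al * (a x * cos (INR k * x)) + be * (b x * cos (INR k * x))) + ga * (c x * cos (INR k * x)))).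
  2: intros; ring.
  rewrite !RInt_plusR, !RInt_scalR. reflexivity. all: ctac.
Qed.

Lemma sB_lin (a b c : R -> R) al be ga k : CT a -> CT b -> CT c ->
  sB (fun x => al * a x + be * b x + ga * c x) k = al * sB a k + be * sB b k + ga * sB c k.
Proof.
  intros Ha Hb Hc. unfold sB.
  rewrite (RInt_extR _ (fun x => (al * (a x * sin (INR k * x)) + be * (b x * sin (INR k * x))) + ga * (c x * sin (INR k * x)))).
  2: intros; ring.
  rewrite !RInt_plusR, !RInt_scalR. reflexivity. all: ctac.
Qed.

Lemma H1_tail_nonneg v n : CT v -> 0 <= H1_tail v n.
Proof.
  intros Hv. rewrite H1_tail_real; auto. pose proof (pos_INR (S n)).
  apply Rmult_le_pos. nra. apply Rmult_le_pos. apply Rmult_le_pos. lra. apply pow2_ge_0.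
  pose proof (pow2_ge_0 (cA v (S n))). pose proof (pow2_ge_0 (sB v (S n))). lra.
Qed.

Lemma H1_lin (a b c : R -> R) al be ga : CT a -> CT b -> CT c ->
  ex_series (H1_tail a) -> ex_series (H1_tail b) -> ex_series (H1_tail c) ->
  ex_series (H1_tail (fun x => al * a x + be * b x + ga * c x)).
Proof.
  intros Ha Hb Hc Sa Sb Sc.
  assert (Hw : CT (fun x => al * a x + be * b x + ga * c x)) by ctac.
  apply (@ex_series_le R_AbsRing R_CompleteNormedModule _
           (fun n => 3 * (al ^ 2 * H1_tail a n + be ^ 2 * H1_tail b n + ga ^ 2 * H1_tail c n))).
  - intros n. change norm with Rabs. rewrite Rabs_right. 2: apply Rle_ge, H1_tail_nonneg; auto.
    rewrite !H1_tail_real; auto. rewrite cA_lin, sB_lin; auto.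
    set (P := (1 + INR (S n) ^ 2) * (2 * (/ (2 * PI)) ^ 2)).
    assert (HP : 0 <= P). { unfold P. pose proof (pos_INR (S n)). apply Rmult_le_pos. nra.
      apply Rmult_le_pos. lra. apply pow2_ge_0. }
    pose proof (sq3 (al * cA a (S n)) (be * cA b (S n)) (ga * cA c (S n))).
    pose proof (sq3 (al * sB a (S n)) (be * sB b (S n)) (ga * sB c (S n))).
    replace ((1 + INR (S n) ^ 2) * (2 * (/ (2 * PI)) ^ 2 * ((al * cA a (S n) + be * cA b (S n) + ga * cA c (S n)) ^ 2 +
       (al * sB a (S n) + be * sB b (S n) + ga * sB c (S n)) ^ 2)))
      with (P * ((al * cA a (S n) + be * cA b (S n) + ga * cA c (S n)) ^ 2 +
       (al * sB a (S n) + be * sB b (S n) + ga * sB c (S n)) ^ 2)) by (unfold P; ring).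
    replace (3 * (al ^ 2 * ((1 + INR (S n) ^ 2) * (2 * (/ (2 * PI)) ^ 2 * (cA a (S n) ^ 2 + sB a (S n) ^ 2))) +
      be ^ 2 * ((1 + INR (S n) ^ 2) * (2 * (/ (2 * PI)) ^ 2 * (cA b (S n) ^ 2 + sB b (S n) ^ 2))) +
      ga ^ 2 * ((1 + INR (S n) ^ 2) * (2 * (/ (2 * PI)) ^ 2 * (cA c (S n) ^ 2 + sB c (S n) ^ 2)))))
      with (P * (3 * ((al * cA a (S n)) ^ 2 + (be * cA b (S n)) ^ 2 + (ga * cA c (S n)) ^ 2) +
                 3 * ((al * sB a (S n)) ^ 2 + (be * sB b (S n)) ^ 2 + (ga * sB c (S n)) ^ 2))) by (unfold P; ring).
    apply Rmult_le_compat_l; auto. lra.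
  - apply exR_scal. apply (exR_plus (fun n => al ^ 2 * H1_tail a n + be ^ 2 * H1_tail b n) (fun n => ga ^ 2 * H1_tail c n)).
    apply (exR_plus (fun n => al ^ 2 * H1_tail a n) (fun n => be ^ 2 * H1_tail b n)).
    all: apply exR_scal; auto.
Qed.

Lemma flim_eps (f : R -> R) (P : R -> Prop) :
  filterlim f (within P (locally 0)) (locally 0) ->
  forall eps, 0 < eps -> exists d, 0 < d /\ forall h, Rabs h < d -> P h -> Rabs (f h) < eps.
Proof.
  intros H eps Heps.
  destruct (proj1 (filterlim_locally f 0) H (mkposreal eps Heps)) as [d Hd].
  exists d. split. apply cond_pos. intros h Hh HP.
  assert (B : ball 0 d h). { change (Rabs (h - 0) < d). rewrite Rminus_0_r; auto. }
  specialize (Hd h B HP). change (Rabs (f h - 0) < eps) in Hd. rewrite Rminus_0_r in Hd; auto.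
Qed.

Lemma KH_pos : 0 < KH.
Proof.
  unfold KH. pose proof PI_pos. pose proof Zc_nonneg.
  assert (0 <= (1 + 2 * PI ^ 2 * Zc) / (2 * PI)).
  { apply Rmult_le_pos. assert (0 <= PI ^ 2) by apply pow2_ge_0. nra.
    left; apply Rinv_0_lt_compat; lra. }
  lra.
Qed.

Lemma inH1_facts v : inH1 v -> CT v /\ periodic' v /\ ex_series (H1_tail v).
Proof. intros [H1 [H2 H3]]. split; [|split]; auto. Qed.

Lemma DER (F G : R -> R)
  (TB : forall y d, Rabs (F (y + d) - F y - G y * d) <= d ^ 2)
  (HG : forall y, Rabs (G y) <= 1)
  (CF : forall v, CT v -> CT (fun x => F (v x)))
  (CG : forall v, CT v -> CT (fun x => G (v x)))
  (u u' : R -> R -> R) t :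
  0 <= t ->
  (forall s, 0 <= s -> inH1 (u s) /\ inH1 (u' s)) ->
  filterlim (fun h => H1norm (fun x => (u (t + h) x - u t x) / h - u' t x))
       (within (fun h => h <> 0 /\ 0 <= t + h) (locally 0)) (locally 0) ->
  forall eps, 0 < eps -> exists d, 0 < d /\ forall h, h <> 0 -> 0 <= t + h -> Rabs h < d ->
    Rabs ((RInt (fun x => F (u (t + h) x)) 0 (2 * PI) - RInt (fun x => F (u t x)) 0 (2 * PI)) / h
          - RInt (fun x => G (u t x) * u' t x) 0 (2 * PI)) < eps.
Proof.
  intros Ht Hin Hlim eps Heps. pose proof PI_pos as HPI. pose proof KH_pos as HKH.
  destruct (Hin t Ht) as [I0 I0'].
  destruct (inH1_facts _ I0) as [C0 [P0 S0]].
  destruct (inH1_facts _ I0') as [C0' [P0' S0']].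
  set (M1 := KH * H1norm (u' t)).
  assert (HM1 : forall x, Rabs (u' t x) <= M1) by (intros; apply sup_H1; auto).
  assert (HM10 : 0 <= M1) by (apply Rle_trans with (Rabs (u' t 0)); [apply Rabs_pos | apply HM1]).
  set (Q := (KH + M1) ^ 2).
  assert (HQ : 0 <= Q) by apply pow2_ge_0.
  set (e1 := Rmin 1 (eps / (4 * PI * (KH + 1)))).
  assert (He1 : 0 < e1). { unfold e1. apply Rmin_pos. lra. apply Rdiv_lt_0_compat. lra. nra. }
  destruct (flim_eps _ _ Hlim e1 He1) as [d1 [Hd1 Hd1']].
  set (d2 := eps / (4 * PI * (Q + 1))).
  assert (Hd2 : 0 < d2) by (unfold d2; apply Rdiv_lt_0_compat; nra).
  exists (Rmin d1 d2). split. apply Rmin_pos; auto.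
  intros h Hh0 Hth Hh.
  assert (Hh1 : Rabs h < d1) by (apply Rlt_le_trans with (Rmin d1 d2); auto; apply Rmin_l).
  assert (Hh2 : Rabs h < d2) by (apply Rlt_le_trans with (Rmin d1 d2); auto; apply Rmin_r).
  destruct (Hin (t + h) Hth) as [I1 _].
  destruct (inH1_facts _ I1) as [C1 [P1 S1]].
  set (w := fun x => (u (t + h) x - u t x) / h - u' t x).
  assert (Hwe : w = fun x => / h * u (t + h) x + (- / h) * u t x + (-1) * u' t x).
  { apply functional_extensionality; intros x; unfold w. field. auto. }
  assert (Cw : CT w) by (rewrite Hwe; ctac).
  assert (Pw : periodic' w).
  { intros x. unfold w. rewrite P1, P0, P0'. reflexivity. }
  assert (Sw : ex_series (H1_tail w)) by (rewrite Hwe; apply H1_lin; auto).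
  assert (Hw : H1norm w < e1).
  { specialize (Hd1' h Hh1 (conj Hh0 Hth)). fold w in Hd1'.
    rewrite Rabs_right in Hd1'. auto. apply Rle_ge. unfold H1norm; apply sqrt_pos. }
  assert (Hw1 : H1norm w <= 1) by (assert (e1 <= 1) by apply Rmin_l; lra).
  assert (Hw2 : H1norm w < eps / (4 * PI * (KH + 1))) by (assert (e1 <= eps / (4 * PI * (KH + 1))) by apply Rmin_r; lra).
  assert (Hw0 : 0 <= H1norm w) by (unfold H1norm; apply sqrt_pos).
  assert (Hwx : forall x, Rabs (w x) <= KH * H1norm w) by (intros; apply sup_H1; auto).
  assert (E : (RInt (fun x => F (u (t + h) x)) 0 (2 * PI) - RInt (fun x => F (u t x)) 0 (2 * PI)) / h
          - RInt (fun x => G (u t x) * u' t x) 0 (2 * PI) =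
          RInt (fun x => / h * (F (u (t + h) x) - F (u t x)) - G (u t x) * u' t x) 0 (2 * PI)).
  { rewrite RInt_minusR, RInt_scalR, RInt_minusR. unfold Rdiv. rfix; ring.
    all: try apply CF; auto. all: try (apply ct_mult; [apply CG; auto | auto]).
    apply ct_minus; apply CF; auto. apply ct_scal, ct_minus; apply CF; auto. }
  rewrite E.
  set (B := Rabs h * Q + KH * H1norm w).
  apply Rle_lt_trans with (RInt (fun _ => B) 0 (2 * PI)).
  - apply RInt_abs_le. lra. apply ct_minus. apply ct_scal, ct_minus; apply CF; auto.
    apply ct_mult; [apply CG; auto | auto]. apply ct_const.
    intros x _.
    set (y := u t x). set (dd := u (t + h) x - u t x).
    assert (Hd : u (t + h) x = y + dd) by (unfold y, dd; ring).
    assert (Hdd : dd = h * (w x + u' t x)) by (unfold dd, w; field; auto).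
    rewrite Hd.
    replace (/ h * (F (y + dd) - F y) - G y * u' t x) with
            (/ h * (F (y + dd) - F y - G y * dd) + G y * w x).
    2: { rewrite Hdd. unfold w. fold y. field. auto. }
    eapply Rle_trans. apply Rabs_triang. rewrite !Rabs_mult.
    assert (T1 : Rabs (/ h) * Rabs (F (y + dd) - F y - G y * dd) <= Rabs h * Q).
    { eapply Rle_trans. apply Rmult_le_compat_l. apply Rabs_pos. apply TB.
      rewrite Hdd. rewrite Rabs_inv.
      assert (0 < Rabs h) by (apply Rabs_pos_lt; auto).
      replace (/ Rabs h * (h * (w x + u' t x)) ^ 2) with (Rabs h * (w x + u' t x) ^ 2).
      2: { rewrite <- (Rsqr_pow2 (h * _)), Rsqr_mult, Rsqr_abs.
           rewrite <- (Rsqr_pow2 (w x + u' t x)). unfold Rsqr. field. lra. }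
      apply Rmult_le_compat_l. lra. unfold Q.
      rewrite <- !Rsqr_pow2. rewrite (Rsqr_abs (w x + u' t x)). apply Rsqr_incr_1.
      eapply Rle_trans. apply Rabs_triang. pose proof (Hwx x). pose proof (HM1 x).
      assert (KH * H1norm w <= KH) by (rewrite <- (Rmult_1_r KH) at 2; apply Rmult_le_compat_l; lra).
      lra. apply Rabs_pos. lra. }
    assert (T2 : Rabs (G y) * Rabs (w x) <= KH * H1norm w).
    { pose proof (HG y). pose proof (Hwx x). pose proof (Rabs_pos (w x)). pose proof (Rabs_pos (G y)).
      apply Rle_trans with (1 * Rabs (w x)). apply Rmult_le_compat_r; auto. lra. }
    unfold B. lra.
  - rewrite RInt_constR. unfold B.
    assert (2 * PI * (Rabs h * Q) < eps / 2).
    { apply Rle_lt_trans with (2 * PI * (d2 * Q)).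
      apply Rmult_le_compat_l. lra. apply Rmult_le_compat_r; lra.
      unfold d2. replace (2 * PI * (eps / (4 * PI * (Q + 1)) * Q)) with (eps / 2 * (Q / (Q + 1))) by (field; lra).
      assert (Q / (Q + 1) < 1). { apply (Rmult_lt_reg_r (Q + 1)). lra. unfold Rdiv.
        rewrite Rmult_assoc, Rinv_l. lra. lra. }
      nra. }
    assert (2 * PI * (KH * H1norm w) < eps / 2).
    { apply Rle_lt_trans with (2 * PI * (KH * (eps / (4 * PI * (KH + 1))))).
      apply Rmult_le_compat_l. lra. apply Rmult_le_compat_l; lra.
      replace (2 * PI * (KH * (eps / (4 * PI * (KH + 1))))) with (eps / 2 * (KH / (KH + 1))) by (field; lra).
      assert (KH / (KH + 1) < 1). { apply (Rmult_lt_reg_r (KH + 1)). lra. unfold Rdiv.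
        rewrite Rmult_assoc, Rinv_l. lra. lra. }
      nra. }
    replace ((2 * PI - 0) * (Rabs h * Q + KH * H1norm w)) with
      (2 * PI * (Rabs h * Q) + 2 * PI * (KH * H1norm w)) by ring. lra.
Qed.


Lemma eps_to_dpl (f : R -> R) t l : 0 < t ->
  (forall eps, 0 < eps -> exists d, 0 < d /\ forall h, h <> 0 -> 0 <= t + h -> Rabs h < d ->
      Rabs ((f (t + h) - f t) / h - l) < eps) ->
  derivable_pt_lim f t l.
Proof.
  intros Ht H eps Heps. destruct (H eps Heps) as [d [Hd Hd']].
  assert (Hm : 0 < Rmin d t) by (apply Rmin_pos; auto).
  exists (mkposreal _ Hm). intros h Hh0 Hh. simpl in Hh.
  apply Hd'; auto.
  assert (Rabs h < t) by (apply Rlt_le_trans with (Rmin d t); auto; apply Rmin_r).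
  unfold Rabs in H0; destruct (Rcase_abs h); lra.
  apply Rlt_le_trans with (Rmin d t); auto; apply Rmin_l.
Qed.

Lemma right_lip (f : R -> R) l :
  (forall eps, 0 < eps -> exists d, 0 < d /\ forall h, h <> 0 -> 0 <= 0 + h -> Rabs h < d ->
      Rabs ((f (0 + h) - f 0) / h - l) < eps) ->
  exists d, 0 < d /\ forall s, 0 < s < d -> Rabs (f s - f 0) <= s * (Rabs l + 1).
Proof.
  intros H. destruct (H 1 Rlt_0_1) as [d [Hd Hd']]. exists d. split; auto.
  intros s Hs. specialize (Hd' s). rewrite Rplus_0_l in Hd'.
  assert (A : Rabs ((f s - f 0) / s - l) < 1).
  { apply Hd'. lra. lra. rewrite Rabs_right; lra. }
  replace (f s - f 0) with (s * ((f s - f 0) / s - l) + s * l) by (field; lra).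
  eapply Rle_trans. apply Rabs_triang. rewrite !Rabs_mult, Rabs_right. 2: lra.
  pose proof (Rabs_pos l). nra.
Qed.

Theorem mainTheorem5 (H0 : R) (u0 : R -> R) (u u' : R -> R -> R) :
  H0 <> 0 ->
  inH1 u0 -> calF u0 = 0 -> calH u0 = H0 ->
  C1_H1 u u' ->
  (forall x, u 0 x = u0 x) ->
  (forall t, 0 <= t -> forall x,
      u' t x = dagger (fun y => sin (u t y)) x - / H0 * calCt (u t)) ->
  forall t, 0 <= t -> calF (u t) = 0 /\ calH (u t) = H0.
Proof.
  intros HH0 Hu0 HF0 HH0' [Hin [Hlim _]] Hinit Heq.
  pose proof PI_pos as HPI.
  set (a := fun t => calF (u t)).
  set (b := fun t => calH (u t)).
  set (da := fun t => RInt (fun x => cos (u t x) * u' t x) 0 (2 * PI)).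
  set (db := fun t => RInt (fun x => - sin (u t x) * u' t x) 0 (2 * PI)).
  assert (Da : forall t, 0 <= t -> forall eps, 0 < eps -> exists d, 0 < d /\ forall h, h <> 0 -> 0 <= t + h ->
            Rabs h < d -> Rabs ((a (t + h) - a t) / h - da t) < eps).
  { intros t Ht. apply (DER sin cos taylor_sin (fun y => Rabs_le _ _ (COS_bound y)) ct_sin ct_cos u u' t Ht Hin (Hlim t Ht)). }
  assert (Db : forall t, 0 <= t -> forall eps, 0 < eps -> exists d, 0 < d /\ forall h, h <> 0 -> 0 <= t + h ->
            Rabs h < d -> Rabs ((b (t + h) - b t) / h - db t) < eps).
  { intros t Ht. apply (DER cos (fun y => - sin y) taylor_cos).
    intros y; rewrite Rabs_Ropp; apply Rabs_le, SIN_bound.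
    exact ct_cos. intros v Hv; apply ct_opp, ct_sin; auto.
    exact Ht. exact Hin. exact (Hlim t Ht). }
  assert (Rel : forall t, 0 <= t -> da t = calCt (u t) - / H0 * calCt (u t) * b t /\
                                     db t = / H0 * calCt (u t) * a t).
  { intros t Ht. destruct (Hin t Ht) as [I0 I0'].
    destruct (inH1_facts _ I0) as [C0 [P0 S0]].
    destruct (inH1_facts _ I0') as [C0' [P0' S0']].
    set (c := / H0 * calCt (u t)).
    set (g := fun y => sin (u t y)).
    assert (Cg : CT g) by (unfold g; ctac).
    assert (Cd : CT (dagger g)).
    { apply (ct_ext (fun x => u' t x + c)). intros x. rewrite (Heq t Ht x). unfold c, g. ring.
      ctac. }
    split.
    - unfold da, b, calH, calCt. fold g.
      rewrite (RInt_extR _ (fun x => cos (u t x) * dagger g x - c * cos (u t x))).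
      rewrite RInt_minusR, RInt_scalR. reflexivity.
      ctac. ctac. ctac.
      intros x. rewrite (Heq t Ht x). unfold c, g. ring.
    - unfold db, a, calF.
      rewrite (RInt_extR _ (fun x => c * g x - g x * dagger g x)).
      rewrite RInt_minusR, RInt_scalR, dagger_zero. unfold g. rfix; ring.
      exact Cg. intros y; unfold g; rewrite P0; reflexivity.
      intros y; apply Rabs_le, SIN_bound. exact Cd.
      exact Cg. apply ct_scal, Cg. apply ct_mult; auto.
      intros x. rewrite (Heq t Ht x). unfold c, g. ring. }
  set (V := fun t => a t ^ 2 + (b t - H0) ^ 2).
  assert (a0 : a 0 = 0).
  { unfold a. transitivity (calF u0); [|exact HF0]. unfold calF. apply RInt_extR; intros; rewrite Hinit; reflexivity. }
  assert (b0 : b 0 = H0).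
  { unfold b. transitivity (calH u0); [|exact HH0']. unfold calH. apply RInt_extR; intros; rewrite Hinit; reflexivity. }
  assert (V0 : V 0 = 0) by (unfold V; rewrite a0, b0; ring).
  assert (DV : forall t, 0 < t -> is_derive V t 0).
  { intros t Ht. apply is_derive_Reals.
    assert (Ha := eps_to_dpl a t (da t) Ht (Da t (Rlt_le _ _ Ht))).
    assert (Hb := eps_to_dpl b t (db t) Ht (Db t (Rlt_le _ _ Ht))).
    assert (H1 := derivable_pt_lim_mult a a t _ _ Ha Ha).
    assert (Hb' := derivable_pt_lim_minus b (fct_cte H0) t _ _ Hb (derivable_pt_lim_const H0 t)).
    assert (H2 := derivable_pt_lim_mult _ _ t _ _ Hb' Hb').
    assert (H3 := derivable_pt_lim_plus _ _ t _ _ H1 H2).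
    destruct (Rel t (Rlt_le _ _ Ht)) as [R1 R2].
    replace 0 with (da t * a t + a t * da t +
      ((db t - 0) * (b - fct_cte H0)%F t + (b - fct_cte H0)%F t * (db t - 0))).
    2: { unfold minus_fct, fct_cte. rewrite R1, R2. field. auto. }
    apply (derivable_pt_lim_ext _ V) in H3. exact H3.
    intros s. unfold V, mult_fct, plus_fct, minus_fct, fct_cte. ring. }
  destruct (right_lip a (da 0) (Da 0 (Rle_refl 0))) as [da0 [Hda0 Ha0]].
  destruct (right_lip b (db 0) (Db 0 (Rle_refl 0))) as [db0 [Hdb0 Hb0]].
  set (K := (Rabs (da 0) + 1) ^ 2 + (Rabs (db 0) + 1) ^ 2).
  assert (HK : 0 <= K) by (unfold K; pose proof (pow2_ge_0 (Rabs (da 0) + 1)); pose proof (pow2_ge_0 (Rabs (db 0) + 1)); lra).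
  assert (Vs : forall s, 0 < s -> s < da0 -> s < db0 -> V s <= s ^ 2 * K).
  { intros s Hs1 Hs2 Hs3. unfold V, K.
    specialize (Ha0 s (conj Hs1 Hs2)). specialize (Hb0 s (conj Hs1 Hs3)).
    rewrite a0 in Ha0. rewrite b0 in Hb0. rewrite Rminus_0_r in Ha0.
    assert (a s ^ 2 <= (s * (Rabs (da 0) + 1)) ^ 2).
    { rewrite <- !Rsqr_pow2, (Rsqr_abs (a s)). apply Rsqr_incr_1; auto. apply Rabs_pos.
      pose proof (Rabs_pos (da 0)); nra. }
    assert ((b s - H0) ^ 2 <= (s * (Rabs (db 0) + 1)) ^ 2).
    { rewrite <- !Rsqr_pow2, (Rsqr_abs (b s - H0)). apply Rsqr_incr_1; auto. apply Rabs_pos.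
      pose proof (Rabs_pos (db 0)); nra. }
    replace (s ^ 2 * ((Rabs (da 0) + 1) ^ 2 + (Rabs (db 0) + 1) ^ 2)) with
      ((s * (Rabs (da 0) + 1)) ^ 2 + (s * (Rabs (db 0) + 1)) ^ 2) by ring. lra. }
  intros t Ht.
  assert (VT : V t = 0).
  { destruct (Req_dec t 0) as [E|E]. subst t. exact V0.
    assert (Ht' : 0 < t) by lra.
    assert (Vnn : 0 <= V t) by (unfold V; pose proof (pow2_ge_0 (a t)); pose proof (pow2_ge_0 (b t - H0)); lra).
    assert (Veq : forall s, 0 < s < t -> V t = V s).
    { intros s Hs. destruct (MVT_gen V s t (fun _ => 0)) as [c [Hc Ec]].
      - intros x Hx. apply DV. unfold Rmin in Hx; destruct (Rle_dec s t); lra.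
      - intros x Hx. apply (der_cpt V x 0). apply DV. unfold Rmin in Hx; destruct (Rle_dec s t); lra.
      - lra. }
    apply Rle_antisym; auto. apply le_epsilon. intros eps Heps.
    set (s := Rmin (Rmin (da0 / 2) (db0 / 2)) (Rmin (t / 2) (Rmin (1 / 2) (eps / (K + 1))))).
    assert (Hs0 : 0 < s).
    { unfold s. repeat apply Rmin_pos; try lra. apply Rdiv_lt_0_compat; lra. }
    assert (Hs1 : s <= da0 / 2) by (unfold s; eapply Rle_trans; [apply Rmin_l | apply Rmin_l]).
    assert (Hs2 : s <= db0 / 2) by (unfold s; eapply Rle_trans; [apply Rmin_l | apply Rmin_r]).
    assert (Hs3 : s <= t / 2) by (unfold s; eapply Rle_trans; [apply Rmin_r | apply Rmin_l]).
    assert (Hs4 : s <= 1 / 2) by (unfold s; eapply Rle_trans; [apply Rmin_r | eapply Rle_trans; [apply Rmin_r | apply Rmin_l]]).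
    assert (Hs5 : s <= eps / (K + 1)) by (unfold s; eapply Rle_trans; [apply Rmin_r | eapply Rle_trans; [apply Rmin_r | apply Rmin_r]]).
    rewrite (Veq s). 2: lra.
    eapply Rle_trans. apply Vs; lra.
    assert (s ^ 2 <= s) by nra.
    assert (s * K <= eps).
    { apply Rle_trans with (eps / (K + 1) * K). apply Rmult_le_compat_r; auto.
      replace (eps / (K + 1) * K) with (eps * (K / (K + 1))) by (field; lra).
      assert (K / (K + 1) <= 1). { apply (Rmult_le_reg_r (K + 1)). lra. unfold Rdiv.
        rewrite Rmult_assoc, Rinv_l; lra. }
      nra. }
    nra. }
  unfold V in VT. fold (a t) (b t).
  assert (a t ^ 2 = 0 /\ (b t - H0) ^ 2 = 0).
  { pose proof (pow2_ge_0 (a t)); pose proof (pow2_ge_0 (b t - H0)). split; lra. }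
  destruct H as [A B]. split.
  - nra.
  - nra.
Qed.
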